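(* Let $\Delta>0$, $\nu>0$, $R\in\mathbb{R}$ with $\Delta^2-4\Delta\nu(1+\Delta R)<0$ (so that $p_\pm^2$ are non-real complex conjugates and all eigenvalues $\lambda^{\rm o}_k,\lambda^{\rm e}_k$ are nonzero). Let $p_+$ be a square root of $p_+^2$. Then for all $x,y\in[-1,1]$, $$\sum_{k=1}^{\infty}\left\{\frac{w^{\rm o}_k(x)w^{\rm o}_k(y)}{\lambda^{\rm o}_k}+\frac{w^{\rm e}_k(x)w^{\rm e}_k(y)}{\lambda^{\rm e}_k}\right\} =\frac{1}{\Delta\nu\,\Im(p_+^2-p_-^2)}\,\Im\!\left(\frac{-\cos\big(2p_+-p_+|x-y|\big)+\cos\big(p_+(x+y)\big)}{p_+\sin(2p_+)}\right)=:G(x,y),$$ and $G$ is the Green's function of the boundary value problem $\mathcal{L}v=r$, $v(-1)=v(1)=v_{xx}(-1)=v_{xx}(1)=0$, i.e. for every continuous $r$ on $[-1,1]$ the function $v(x)=\int_{-1}^{1}G(x,y)r(y)\,dy$ is its solution.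
   Context: $\mathcal{L}=1+\Delta R+\Delta\,\partial_{xx}+\Delta\nu\,\partial_{xxxx}$ on $[-1,1]$. $w^{\rm o}_k(x)=\sin(k\pi x)$, $w^{\rm e}_k(x)=\cos((k-\tfrac12)\pi x)$, $\lambda^{\rm o}_k=1+\Delta R-\Delta\pi^2k^2+\Delta\nu\pi^4k^4$, $\lambda^{\rm e}_k=1+\Delta R-\Delta\pi^2(k-\tfrac12)^2+\Delta\nu\pi^4(k-\tfrac12)^4$ for $k\ge1$. $p_\pm^2=\frac{1}{2\nu}\pm\frac{1}{2\Delta\nu}\sqrt{\Delta^2-4\Delta\nu(1+\Delta R)}$, where the square root of the negative discriminant is $i\sqrt{4\Delta\nu(1+\Delta R)-\Delta^2}$. *)

(* Defs.v *)
From Stdlib Require Import Reals Lra.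
Open Scope R_scope.

Definition Cplx : Type := (R * R)%type.
Definition Re (z : Cplx) : R := fst z.
Definition Im (z : Cplx) : R := snd z.
Definition RtoC (a : R) : Cplx := (a, 0).
Definition Cadd (z w : Cplx) : Cplx := (fst z + fst w, snd z + snd w).
Definition Copp (z : Cplx) : Cplx := (- fst z, - snd z).
Definition Csub (z w : Cplx) : Cplx := Cadd z (Copp w).
Definition Cmul (z w : Cplx) : Cplx :=
  (fst z * fst w - snd z * snd w, fst z * snd w + snd z * fst w).
Definition Cinv (z : Cplx) : Cplx :=
  (fst z / (fst z ^ 2 + snd z ^ 2), - snd z / (fst z ^ 2 + snd z ^ 2)).
Definition Cdiv (z w : Cplx) : Cplx := Cmul z (Cinv w).
Definition Cscal (a : R) (z : Cplx) : Cplx := (a * fst z, a * snd z).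
(** Complex cosine and sine:
    cos(a+ib) = cos a cosh b - i sin a sinh b,
    sin(a+ib) = sin a cosh b + i cos a sinh b. *)
Definition Ccos (z : Cplx) : Cplx :=
  (cos (fst z) * cosh (snd z), - (sin (fst z) * sinh (snd z))).
Definition Csin (z : Cplx) : Cplx :=
  (sin (fst z) * cosh (snd z), cos (fst z) * sinh (snd z)).

(** Eigenfunctions and eigenvalues (k >= 1). *)
Definition wo (k : nat) (x : R) : R := sin (INR k * PI * x).
Definition we (k : nat) (x : R) : R := cos ((INR k - 1/2) * PI * x).
Definition lamo (D nu Rr : R) (k : nat) : R :=
  1 + D * Rr - D * PI ^ 2 * INR k ^ 2 + D * nu * PI ^ 4 * INR k ^ 4.
Definition lame (D nu Rr : R) (k : nat) : R :=
  1 + D * Rr - D * PI ^ 2 * (INR k - 1/2) ^ 2 + D * nu * PI ^ 4 * (INR k - 1/2) ^ 4.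

(** Discriminant and p_{+-}^2 (for negative discriminant). *)
Definition discr (D nu Rr : R) : R := D ^ 2 - 4 * D * nu * (1 + D * Rr).
Definition pplus2 (D nu Rr : R) : Cplx :=
  (1 / (2 * nu), 1 / (2 * D * nu) * sqrt (4 * D * nu * (1 + D * Rr) - D ^ 2)).
Definition pminus2 (D nu Rr : R) : Cplx :=
  (1 / (2 * nu), - (1 / (2 * D * nu) * sqrt (4 * D * nu * (1 + D * Rr) - D ^ 2))).

Definition Gfun (D nu Rr : R) (p : Cplx) (x y : R) : R :=
  1 / (D * nu * Im (Csub (pplus2 D nu Rr) (pminus2 D nu Rr))) *
  Im (Cdiv
        (Cadd (Copp (Ccos (Csub (Cscal 2 p) (Cscal (Rabs (x - y)) p))))
              (Ccos (Cscal (x + y) p)))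
        (Cmul p (Csin (Cscal 2 p)))).

Definition series_term (D nu Rr : R) (x y : R) (k : nat) : R :=
  wo k x * wo k y / lamo D nu Rr k + we k x * we k y / lame D nu Rr k.

Definition inI (x : R) : Prop := -1 <= x <= 1.
Definition cont_on_I (f : R -> R) : Prop :=
  forall x, inI x -> limit1_in f inI (f x) x.

Definition is_solution (D nu Rr : R) (r v : R -> R) : Prop :=
  exists v1 v2 v3 v4 : R -> R,
    (forall x, -1 < x < 1 ->
        derivable_pt_lim v x (v1 x) /\ derivable_pt_lim v1 x (v2 x) /\
        derivable_pt_lim v2 x (v3 x) /\ derivable_pt_lim v3 x (v4 x) /\
        (1 + D * Rr) * v x + D * v2 x + D * nu * v4 x = r x) /\
    cont_on_I v /\ cont_on_I v1 /\ cont_on_I v2 /\ cont_on_I v3 /\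
    v (-1) = 0 /\ v 1 = 0 /\ v2 (-1) = 0 /\ v2 1 = 0.

(* Main.v *)
Require Import Defs.
From Stdlib Require Import Reals.
Open Scope R_scope.
From Stdlib Require Import Lra Lia Field.
From Coquelicot Require Import Rcomplements Hierarchy Derive RInt RInt_analysis AutoDerive Continuity.

Lemma ceq (a b c d : R) : a = c -> b = d -> ((a, b) : Cplx) = (c, d).
Proof. intros; subst; reflexivity. Qed.

Lemma ceq' (z w : Cplx) : fst z = fst w -> snd z = snd w -> z = w.
Proof. destruct z, w; simpl; intros; subst; reflexivity. Qed.

Ltac cring := apply ceq'; simpl; ring.

Definition C0 : Cplx := (0,0).
Definition C1 : Cplx := (1,0).

Lemma Cmul_comm z w : Cmul z w = Cmul w z. Proof. destruct z, w; cring. Qed.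
Lemma Cmul_assoc z w u : Cmul z (Cmul w u) = Cmul (Cmul z w) u. Proof. destruct z, w, u; cring. Qed.
Lemma Cmul_addr z w u : Cmul z (Cadd w u) = Cadd (Cmul z w) (Cmul z u). Proof. destruct z, w, u; cring. Qed.
Lemma Cmul_addl z w u : Cmul (Cadd w u) z = Cadd (Cmul w z) (Cmul u z). Proof. destruct z, w, u; cring. Qed.

Definition Cnorm2 (z : Cplx) := fst z ^ 2 + snd z ^ 2.

Lemma Cnorm2_pos z : z <> C0 -> 0 < Cnorm2 z.
Proof. destruct z as [a b]; unfold Cnorm2, C0; simpl; intros H.
  destruct (Req_dec a 0); destruct (Req_dec b 0); subst; try (exfalso; auto; fail); nra. Qed.

Lemma Cinv_r z : z <> C0 -> Cmul z (Cinv z) = C1.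
Proof. intros H. pose proof (Cnorm2_pos z H). unfold Cnorm2 in *. destruct z as [a b].
  unfold Cmul, Cinv, C1; simpl in *. apply ceq; field; lra. Qed.

Definition Cder (f : R -> Cplx) (x : R) (l : Cplx) :=
  is_derive (fun t => fst (f t)) x (fst l) /\ is_derive (fun t => snd (f t)) x (snd l).

Lemma Cder_ext f g x l : (forall t, f t = g t) -> Cder f x l -> Cder g x l.
Proof. intros E [H1 H2]; split.
  apply (is_derive_ext (fun t => fst (f t))); auto; intros t; now rewrite E.
  apply (is_derive_ext (fun t => snd (f t))); auto; intros t; now rewrite E. Qed.

Lemma Cder_add f g x l m : Cder f x l -> Cder g x m -> Cder (fun t => Cadd (f t) (g t)) x (Cadd l m).
Proof. intros [H1 H2] [H3 H4]; split; simpl; apply (is_derive_plus (V:=R_NormedModule)); auto. Qed.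

Lemma rd f x l : derivable_pt_lim f x l -> is_derive f x l.
Proof. intros; apply is_derive_Reals; auto. Qed.
Lemma dr f x l : is_derive f x l -> derivable_pt_lim f x l.
Proof. intros; apply is_derive_Reals; auto. Qed.

Lemma Cder_mul f g x l m : Cder f x l -> Cder g x m ->
  Cder (fun t => Cmul (f t) (g t)) x (Cadd (Cmul l (g x)) (Cmul (f x) m)).
Proof. intros [H1 H2] [H3 H4]. apply dr in H1, H2, H3, H4. split; simpl; apply rd.
- pose proof (derivable_pt_lim_minus _ _ _ _ _ (derivable_pt_lim_mult _ _ _ _ _ H1 H3)
          (derivable_pt_lim_mult _ _ _ _ _ H2 H4)) as K.
  match goal with |- derivable_pt_lim _ _ ?v => replace v with
   (fst l * fst (g x) + fst (f x) * fst m - (snd l * snd (g x) + snd (f x) * snd m)) by ring end.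
  exact K.
- pose proof (derivable_pt_lim_plus _ _ _ _ _ (derivable_pt_lim_mult _ _ _ _ _ H1 H4)
          (derivable_pt_lim_mult _ _ _ _ _ H2 H3)) as K.
  match goal with |- derivable_pt_lim _ _ ?v => replace v with
   (fst l * snd (g x) + fst (f x) * snd m + (snd l * fst (g x) + snd (f x) * fst m)) by ring end.
  exact K.
Qed.

Lemma Cder_const z x : Cder (fun _ => z) x C0.
Proof. split; simpl; apply rd; apply derivable_pt_lim_const. Qed.

Lemma Cder_scal f x l (a : R) : Cder f x l -> Cder (fun t => Cscal a (f t)) x (Cscal a l).
Proof. intros [H1 H2]; split; simpl; apply rd; apply dr in H1, H2.
  apply (derivable_pt_lim_scal _ a x _ H1). apply (derivable_pt_lim_scal _ a x _ H2). Qed.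

Lemma Cder_cmul f x l z : Cder f x l -> Cder (fun t => Cmul z (f t)) x (Cmul z l).
Proof. intros H. eapply Cder_ext. 2: { pose proof (Cder_mul _ _ x _ _ (Cder_const z x) H) as K. 
  replace (Cmul z l) with (Cadd (Cmul C0 (f x)) (Cmul z l)). exact K. destruct (f x), z, l; cring. }
  reflexivity. Qed.

Definition aff (q r : Cplx) (t : R) : Cplx := Cadd (Cscal t q) r.

Lemma Cder_cos_aff q r x :
  Cder (fun t => Ccos (aff q r t)) x (Copp (Cmul q (Csin (aff q r x)))).
Proof. destruct q as [q1 q2], r as [r1 r2]. unfold aff, Ccos, Csin, Cscal, Cadd, Copp, Cmul; simpl.
  split; simpl; unfold cosh, sinh; auto_derive; auto; field. Qed.

Lemma Cder_sin_aff q r x :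
  Cder (fun t => Csin (aff q r t)) x (Cmul q (Ccos (aff q r x))).
Proof. destruct q as [q1 q2], r as [r1 r2]. unfold aff, Ccos, Csin, Cscal, Cadd, Copp, Cmul; simpl.
  split; simpl; unfold cosh, sinh; auto_derive; auto; field. Qed.

Lemma Cder_RtoC f x l : is_derive f x l -> Cder (fun t => RtoC (f t)) x (RtoC l).
Proof. intros H; split; simpl; auto. apply rd; apply derivable_pt_lim_const. Qed.


Lemma cont_of_der (f : R -> R) x l : is_derive f x l -> continuous f x.
Proof. intros H. apply (ex_derive_continuous (K:=R_AbsRing) (V:=R_NormedModule)). exists l; auto. Qed.

Lemma cont_of_ex (f : R -> R) x : ex_derive f x -> continuous f x.
Proof. intros H. apply (ex_derive_continuous (K:=R_AbsRing) (V:=R_NormedModule)); auto. Qed.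

Fixpoint csum (f : nat -> R) (N : nat) : R :=
  match N with O => 0 | S n => csum f n + f (S n) end.

Lemma csum_ext f g N : (forall m, (1 <= m <= N)%nat -> f m = g m) -> csum f N = csum g N.
Proof. induction N; simpl; intros H; auto. rewrite IHN, (H (S N)); [auto|lia|]. intros; apply H; lia. Qed.

Lemma csum_der (F F' : nat -> R -> R) x N :
  (forall m, (1 <= m)%nat -> is_derive (F m) x (F' m x)) ->
  is_derive (fun t => csum (fun m => F m t) N) x (csum (fun m => F' m x) N).
Proof. intros H; induction N; simpl.
- apply is_derive_Reals, derivable_pt_lim_const.
- apply (is_derive_plus (V:=R_NormedModule)); auto. apply H; lia.
Qed.

Lemma csum_cont (F : nat -> R -> R) x N :
  (forall m, continuous (F m) x) -> continuous (fun t => csum (fun m => F m t) N) x.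
Proof. intros H; induction N; simpl.
- apply continuous_const.
- apply (continuous_plus (fun t => csum (fun m => F m t) N) (F (S N))); auto.
Qed.

Lemma csum_S f n : csum f (S n) = csum f n + f (S n).
Proof. reflexivity. Qed.

Definition DN (N : nat) (s : R) := / 2 + csum (fun m => cos (INR m * s)) N.

Lemma DN_closed N s : 2 * sin (s / 2) * DN N s = sin ((INR N + / 2) * s).
Proof. induction N; unfold DN in *.
- simpl csum. simpl INR. replace ((0 + /2) * s) with (s/2) by field. field.
- rewrite csum_S. replace (2 * sin (s / 2) * (/ 2 + (csum (fun m : nat => cos (INR m * s)) N + cos (INR (S N) * s))))
    with (2 * sin (s / 2) * (/ 2 + csum (fun m : nat => cos (INR m * s)) N) + 2 * sin (s/2) * cos (INR (S N) * s)) by ring.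
  rewrite IHN. rewrite S_INR.
  set (B := (INR N + 1) * s).
  replace ((INR N + / 2) * s) with (B - s/2) by (unfold B; field).
  replace ((INR N + 1 + / 2) * s) with (B + s/2) by (unfold B; field).
  rewrite sin_minus, sin_plus. ring.
Qed.

Definition Qs (N : nat) (t : R) := csum (fun m => (cos (INR m * t) - cos (INR m * PI)) / INR m ^ 2) N.
Definition Ts (N : nat) (t : R) := csum (fun m => sin (INR m * t) / INR m) N.

Lemma INR_nz m : (1 <= m)%nat -> INR m <> 0.
Proof. intros; apply not_0_INR; lia. Qed.

Lemma Qs_der N t : is_derive (Qs N) t (- Ts N t).
Proof. unfold Qs, Ts.
  replace (- csum (fun m => sin (INR m * t) / INR m) N) with
    (csum (fun m => - sin (INR m * t) / INR m) N).
  2:{ induction N; [simpl; ring| rewrite !csum_S, IHN; field; apply INR_nz; lia]. }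
  apply (csum_der (fun m t => (cos (INR m * t) - cos (INR m * PI)) / INR m ^ 2)
     (fun m t => - sin (INR m * t) / INR m)).
  intros m Hm. pose proof (INR_nz m Hm). auto_derive; auto. field; auto.
Qed.

Lemma Ts_der N t : is_derive (Ts N) t (DN N t - /2).
Proof. unfold Ts, DN. replace (/ 2 + csum (fun m : nat => cos (INR m * t)) N - / 2) with
  (csum (fun m : nat => cos (INR m * t)) N) by ring.
  apply (csum_der (fun m t => sin (INR m * t) / INR m) (fun m t => cos (INR m * t))).
  intros m Hm. pose proof (INR_nz m Hm). auto_derive; auto. field; auto.
Qed.

Lemma DN_cont N t : continuous (DN N) t.
Proof. unfold DN. apply (continuous_plus (fun _ => /2) (fun t => csum (fun m => cos (INR m * t)) N)).
  apply continuous_const. apply csum_cont. intros m. eapply cont_of_der. auto_derive; auto. Qed.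

Lemma Qs_pi N : Qs N PI = 0.
Proof. unfold Qs; induction N; auto. rewrite csum_S, IHN. unfold Rdiv. ring. Qed.

Lemma Ts_pi N : Ts N PI = 0.
Proof. unfold Ts; induction N; rewrite ?csum_S; simpl csum; auto. rewrite IHN.
  rewrite (sin_eq_0_1 (INR (S N) * PI)). unfold Rdiv; ring.
  exists (Z.of_nat (S N)). rewrite <- INR_IZR_INZ. auto. Qed.

Definition eN (N : nat) (t : R) := Qs N t - (PI - t) ^ 2 / 4.

Lemma eN_repr N th : eN N th = - RInt (fun s => (s - th) * DN N s) th PI.
Proof.
  set (Psi := fun s => eN N s - (s - th) * (- Ts N s + (PI - s) / 2)).
  assert (H : is_RInt (fun s => (s - th) * DN N s) th PI (minus (Psi PI) (Psi th))).
  { apply (is_RInt_derive Psi).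
    - intros x _. unfold Psi, eN.
      pose proof (Qs_der N x). pose proof (Ts_der N x).
      evar (d : R). replace ((x - th) * DN N x) with d. 
      + apply (is_derive_minus (V:=R_NormedModule)).
        apply (is_derive_minus (V:=R_NormedModule)). eassumption.
        auto_derive; auto.
        apply rd. apply derivable_pt_lim_mult. apply dr. auto_derive; auto.
        apply derivable_pt_lim_plus. apply derivable_pt_lim_opp. apply dr; eassumption.
        apply dr. auto_derive; auto.
      + unfold d. unfold minus, plus, opp; simpl. field.
    - intros x _. apply (continuous_mult (fun s => s - th) (DN N)).
      eapply cont_of_der; auto_derive; auto. apply DN_cont. }
  apply (is_RInt_unique (V:=R_CompleteNormedModule)) in H. rewrite H. unfold Psi, eN. rewrite Qs_pi, Ts_pi.
  unfold minus, plus, opp; simpl. field.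
Qed.

Lemma sin_half_lb (x:R) : 0 <= x <= 1/2 -> x / 2 <= sin x.
Proof. intros H. assert (PI > 3) by (pose proof PI2_3_2; lra). destruct (SIN x) as [H1 _]; try lra.
  assert (E : sin_lb x = x - x^3/6 + x^5/120 - x^7/5040) by (unfold sin_lb, sin_approx, sin_term; simpl; field).
  rewrite E in H1. assert (x*x <= 1/4) by nra. assert (x^3 <= x/4) by nra. assert (0 <= x^5) by (apply pow_le; lra).
  assert (x^7 <= x^3) by (replace (x^7) with (x^3 * (x*x)^2) by ring; assert ((x*x)^2 <= 1) by nra; nra). lra. Qed.

Lemma PI_gt3 : 3 < PI. Proof. pose proof PI2_3_2; lra. Qed.

Lemma DN_eq N s : sin (s/2) <> 0 -> DN N s = sin ((INR N + /2) * s) / (2 * sin (s/2)).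
Proof. intros H. rewrite <- DN_closed. field. auto. Qed.

Lemma div_bound x y X m : 0 < m -> m <= y -> Rabs x <= X -> Rabs (x / y) <= X / m.
Proof. intros Hm Hy Hx. unfold Rdiv. rewrite Rabs_mult, Rabs_inv, (Rabs_right y) by lra.
  apply Rmult_le_compat; auto using Rabs_pos. left; apply Rinv_0_lt_compat; lra.
  apply Rinv_le_contravar; lra. Qed.

Lemma h_bound N th s : 0 <= th <= s -> s <= 1 -> Rabs ((s - th) * DN N s) <= 2.
Proof. intros H1 H2. destruct (Req_dec s 0) as [E|E].
  { subst. replace th with 0 by lra. rewrite Rminus_0_r, Rmult_0_l, Rabs_R0. lra. }
  assert (Hs : s/2/2 <= sin (s/2)) by (apply sin_half_lb; lra).
  rewrite DN_eq by lra.
  replace ((s - th) * (sin ((INR N + / 2) * s) / (2 * sin (s / 2)))) with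
    (((s - th) * sin ((INR N + / 2) * s)) / (2 * sin (s / 2))) by (field; lra).
  eapply Rle_trans; [apply (div_bound _ _ s (s/2))|]; try lra.
  2:{ right; field; lra. }
  rewrite Rabs_mult. rewrite (Rabs_right (s - th)) by lra.
  pose proof (SIN_bound ((INR N + / 2) * s)) as K.
  apply Rle_trans with ((s-th)*1). apply Rmult_le_compat_l; [lra|]. apply Rabs_le; lra. lra.
Qed.

Lemma h_cont N th s : continuous (fun s => (s - th) * DN N s) s.
Proof. apply (continuous_mult (fun s => s - th) (DN N)).
  eapply cont_of_der; auto_derive; auto. apply DN_cont. Qed.

Lemma h_ex N th a b : ex_RInt (fun s => (s - th) * DN N s) a b.
Proof. apply (ex_RInt_continuous (V:=R_CompleteNormedModule)). intros; apply h_cont. Qed.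

Lemma head_bound N th a : 0 <= th <= a -> a <= 1 ->
  Rabs (RInt (fun s => (s - th) * DN N s) th a) <= (a - th) * 2.
Proof. intros H1 H2. apply abs_RInt_le_const. lra. apply h_ex.
  intros t Ht. apply h_bound; lra. Qed.

Lemma sin_half_mono d s : 0 < d -> d <= s <= PI -> sin (d/2) <= sin (s/2).
Proof. intros. destruct (Req_dec d s). subst; lra. left. apply sin_increasing_1; try lra. Qed.

Lemma sin_half_pos d : 0 < d <= PI -> 0 < sin (d/2).
Proof. intros; apply sin_gt_0; lra. Qed.

Definition Cdel (d : R) := PI / sin (d/2) + PI * (/ (2 * sin (d/2)) + PI / (4 * sin (d/2) ^ 2)).

Lemma tail_bound N d a th : 0 < d <= 1 -> d <= a <= PI -> 0 <= th <= a ->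
  Rabs (RInt (fun s => (s - th) * DN N s) a PI) <= Cdel d / (INR N + /2).
Proof. intros Hd Ha Hth. pose proof PI_gt3.
  set (w := INR N + /2). assert (Hw : 0 < w) by (unfold w; pose proof (pos_INR N); lra).
  set (sg := sin (d/2)). assert (Hsg : 0 < sg) by (apply sin_half_pos; lra).
  assert (Hs : forall s, a <= s <= PI -> sg <= sin (s/2)) by (intros; apply sin_half_mono; lra).
  set (g := fun s => (s - th) / (2 * sin (s/2))).
  set (g' := fun s => / (2 * sin (s/2)) - (s - th) * cos (s/2) / (4 * sin (s/2) ^ 2)).
  set (Phi := fun s => - g s * cos (w * s) / w).
  set (k := fun s => g' s * cos (w * s) / w).
  assert (D1 : forall s, a <= s <= PI -> is_derive Phi s (g s * sin (w * s) - k s)).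
  { intros s Hs0. pose proof (Hs s Hs0). unfold Phi, g, k, g'.
    auto_derive. repeat split; unfold Rdiv in *; lra. unfold Rdiv in *. field. lra. }
  assert (C1 : forall s, a <= s <= PI -> continuous (fun s => g s * sin (w * s) - k s) s).
  { intros s Hs0. pose proof (Hs s Hs0). apply cont_of_ex. unfold g, k, g'. auto_derive.
    repeat split; unfold Rdiv in *; nra. }
  assert (C2 : forall s, a <= s <= PI -> continuous k s).
  { intros s Hs0. pose proof (Hs s Hs0). apply cont_of_ex. unfold k, g'. auto_derive.
    repeat split; unfold Rdiv in *; nra. }
  assert (I1 : is_RInt (fun s => g s * sin (w * s) - k s) a PI (minus (Phi PI) (Phi a))).
  { apply (is_RInt_derive Phi). intros; apply D1; rewrite Rmin_left, Rmax_right in *; lra.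
    intros; apply C1; rewrite Rmin_left, Rmax_right in *; lra. }
  assert (Ek : ex_RInt k a PI).
  { apply (ex_RInt_continuous (V:=R_CompleteNormedModule)). intros; apply C2; rewrite Rmin_left, Rmax_right in *; lra. }
  assert (I2 := is_RInt_plus _ _ _ _ _ _ I1 (RInt_correct _ _ _ Ek)).
  assert (I3 : is_RInt (fun s => (s - th) * DN N s) a PI (plus (minus (Phi PI) (Phi a)) (RInt k a PI))).
  { eapply is_RInt_ext; [|exact I2]. intros s Hs0. rewrite Rmin_left, Rmax_right in Hs0 by lra.
    pose proof (Hs s (conj (Rlt_le _ _ (proj1 Hs0)) (Rlt_le _ _ (proj2 Hs0)))).
    rewrite DN_eq by lra. unfold plus; simpl. unfold g. fold w. field. lra. }
  apply (is_RInt_unique (V:=R_CompleteNormedModule)) in I3. rewrite I3.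
  unfold plus, minus, opp; simpl.
  assert (Bg : forall s, a <= s <= PI -> Rabs (g s) <= PI / (2 * sg)).
  { intros s Hs0. pose proof (Hs s Hs0). unfold g. apply div_bound; try lra. apply Rabs_le; lra. }
  assert (Bphi : forall s, a <= s <= PI -> Rabs (Phi s) <= PI / (2 * sg) / w).
  { intros s Hs0. unfold Phi. apply div_bound; try lra. rewrite Rabs_mult, Rabs_Ropp.
    pose proof (COS_bound (w * s)). pose proof (Bg s Hs0). pose proof (Rabs_pos (g s)).
    apply Rle_trans with (Rabs (g s) * 1). apply Rmult_le_compat_l; auto. apply Rabs_le; lra. lra. }
  assert (Bk : forall s, a <= s <= PI -> Rabs (k s) <= (/ (2 * sg) + PI / (4 * sg ^ 2)) / w).
  { intros s Hs0. pose proof (Hs s Hs0). unfold k. apply div_bound; try lra. rewrite Rabs_mult.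
    pose proof (COS_bound (w * s)).
    apply Rle_trans with (Rabs (g' s) * 1). apply Rmult_le_compat_l; auto using Rabs_pos. apply Rabs_le; lra.
    rewrite Rmult_1_r. unfold g'. eapply Rle_trans. apply Rabs_triang. rewrite Rabs_Ropp.
    apply Rplus_le_compat.
    - rewrite Rabs_inv. rewrite Rabs_right by lra. apply Rinv_le_contravar; lra.
    - assert (0 < sg^2) by (apply pow_lt; lra). apply div_bound. lra. apply Rmult_le_compat_l; [lra|]. apply pow_incr; lra.
      rewrite Rabs_mult. pose proof (COS_bound (s/2)).
      apply Rle_trans with (Rabs (s - th) * 1). apply Rmult_le_compat_l; auto using Rabs_pos. apply Rabs_le; lra.
      rewrite Rmult_1_r. apply Rabs_le; lra. }
  assert (BI : Rabs (RInt k a PI) <= (PI - a) * ((/ (2 * sg) + PI / (4 * sg ^ 2)) / w)).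
  { apply abs_RInt_le_const; auto; lra. }
  pose proof (Bphi PI ltac:(lra)). pose proof (Bphi a ltac:(lra)).
  eapply Rle_trans. apply Rabs_triang. eapply Rle_trans. apply Rplus_le_compat. 
  eapply Rle_trans. apply Rabs_triang. rewrite Rabs_Ropp. apply Rplus_le_compat; eassumption. exact BI.
  unfold Cdel. fold sg. 
  assert (0 <= (/ (2 * sg) + PI / (4 * sg ^ 2)) / w).
  { apply Rmult_le_pos; [|left; apply Rinv_0_lt_compat; lra]. 
    assert (0 < sg ^ 2) by (apply pow_lt; lra).
    apply Rplus_le_le_0_compat; [left; apply Rinv_0_lt_compat; lra| apply Rmult_le_pos; [lra|left; apply Rinv_0_lt_compat; lra]]. }
  assert ((PI - a) * ((/ (2 * sg) + PI / (4 * sg ^ 2)) / w) <= PI * ((/ (2 * sg) + PI / (4 * sg ^ 2)) / w)).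
  { apply Rmult_le_compat_r; lra. }
  apply Rle_trans with (PI / (2 * sg) / w + PI / (2 * sg) / w + PI * ((/ (2 * sg) + PI / (4 * sg ^ 2)) / w)). lra.
  right. field. lra.
Qed.

Lemma Cdel_pos d : 0 < d <= 1 -> 0 <= Cdel d.
Proof. intros. pose proof PI_gt3. assert (0 < sin (d/2)) by (apply sin_half_pos; lra).
  assert (0 < sin (d/2) ^ 2) by (apply pow_lt; lra). unfold Cdel.
  apply Rplus_le_le_0_compat. apply Rmult_le_pos; [lra| left; apply Rinv_0_lt_compat; lra].
  apply Rmult_le_pos; [lra|]. apply Rplus_le_le_0_compat. left; apply Rinv_0_lt_compat; lra.
  apply Rmult_le_pos; [lra| left; apply Rinv_0_lt_compat; lra]. Qed.

Lemma eN_unif : forall eps, 0 < eps -> exists N0, forall N, (N0 <= N)%nat ->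
  forall th, 0 <= th <= PI -> Rabs (eN N th) <= eps.
Proof. intros eps He. pose proof PI_gt3.
  set (d := Rmin 1 (eps/4)). assert (Hd : 0 < d <= 1) by (unfold d; split; [apply Rmin_glb_lt; lra | apply Rmin_l]).
  assert (Hd2 : d <= eps/4) by (unfold d; apply Rmin_r).
  pose proof (Cdel_pos d Hd) as HC. set (Cd := Cdel d) in *.
  destruct (archimed_cor1 (eps / (2 * (Cd + 1)))) as [N0 [HN0 HN0p]].
  { apply Rdiv_lt_0_compat; lra. }
  exists N0. intros N HN th Hth.
  assert (HT : forall a, d <= a <= PI -> 0 <= th <= a ->
     Rabs (RInt (fun s => (s - th) * DN N s) a PI) <= eps/2).
  { intros a Ha Hta. eapply Rle_trans. apply (tail_bound N d a th); auto. fold Cd.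
    assert (0 < INR N0) by (apply lt_0_INR; lia).
    assert (INR N0 <= INR N) by (apply le_INR; auto).
    assert (/ (INR N + /2) <= / INR N0) by (apply Rinv_le_contravar; lra).
    apply Rle_trans with (Cd * / INR N0). unfold Rdiv; apply Rmult_le_compat_l; auto.
    apply Rle_trans with (Cd * (eps / (2 * (Cd + 1)))). apply Rmult_le_compat_l; lra.
    apply Rle_trans with ((Cd + 1) * (eps / (2 * (Cd + 1)))).
    apply Rmult_le_compat_r; [apply Rlt_le, Rdiv_lt_0_compat|]; lra.
    right; field; lra. }
  rewrite eN_repr, Rabs_Ropp. destruct (Rle_dec d th) as [Hdt|Hdt].
  - apply Rle_trans with (eps/2); [apply HT|]; lra.
  - rewrite <- (RInt_Chasles _ th d PI) by apply h_ex.
    unfold plus; simpl. eapply Rle_trans. apply Rabs_triang.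
    pose proof (head_bound N th d ltac:(lra) ltac:(lra)). pose proof (HT d ltac:(lra) ltac:(lra)). lra.
Qed.

Lemma Cfield_th : field_theory C0 C1 Cadd Cmul Csub Copp Cdiv Cinv eq.
Proof. constructor.
- constructor; intros; unfold C0, C1, Csub; repeat match goal with z : Cplx |- _ => destruct z end; cring.
- unfold C0, C1; intros H; inversion H; lra.
- reflexivity.
- intros p Hp. rewrite Cmul_comm. apply Cinv_r. exact Hp.
Qed.
Add Field Cfield : Cfield_th.

Lemma test (a b : Cplx) : b <> C0 -> Cmul (Cdiv a b) b = a.
Proof. intros. field. auto. Qed.

Fixpoint ccsum (f : nat -> Cplx) (N : nat) : Cplx :=
  match N with O => C0 | S n => Cadd (ccsum f n) (f (S n)) end.

Lemma ccsum_S f n : ccsum f (S n) = Cadd (ccsum f n) (f (S n)).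
Proof. reflexivity. Qed.

Lemma Cder_ccsum (F F' : nat -> R -> Cplx) x N :
  (forall m, (1 <= m)%nat -> Cder (F m) x (F' m x)) ->
  Cder (fun t => ccsum (fun m => F m t) N) x (ccsum (fun m => F' m x) N).
Proof. intros H; induction N; simpl.
- apply Cder_const.
- apply Cder_add; auto. apply H; lia. Qed.

Lemma Cder_scalf (f : R -> R) z x l : is_derive f x l -> Cder (fun t => Cscal (f t) z) x (Cscal l z).
Proof. intros H. destruct z as [z1 z2]. split; simpl; apply rd; apply dr in H.
  apply derivable_pt_lim_scal_right; auto. apply derivable_pt_lim_scal_right; auto. Qed.

Definition iota (b : Cplx) (m : nat) : Cplx := Cinv (Csub (RtoC (INR m ^ 2)) b).

Definition Sc b N (t : R) := ccsum (fun m => Cscal (cos (INR m * t)) (iota b m)) N.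
Definition Wc b N (t : R) := ccsum (fun m => Cscal ((cos (INR m * t) - cos (INR m * PI)) / INR m ^ 2) (iota b m)) N.
Definition W1c b N (t : R) := ccsum (fun m => Cscal (- sin (INR m * t) / INR m) (iota b m)) N.

Lemma iota_nz (b : Cplx) (m : R) : snd b <> 0 -> 0 < (m - fst b) ^ 2 + (- snd b) ^ 2.
Proof. intros H. pose proof (Rsqr_pos_lt _ H). unfold Rsqr in *. pose proof (pow2_ge_0 (m - fst b)). replace ((- snd b)^2) with (snd b * snd b) by ring. lra. Qed.

Lemma Sc_I1 b N t : snd b <> 0 ->
  Sc b N t = Cadd (Cadd (Sc b N PI) (RtoC (Qs N t))) (Cmul b (Wc b N t)).
Proof. intros Hb. unfold Sc, Wc, Qs. induction N.
- simpl. unfold C0; cring.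
- rewrite !ccsum_S, csum_S. rewrite IHN.
  assert (Hm : INR (S N) <> 0) by (apply INR_nz; lia).
  pose proof (iota_nz b (INR (S N) ^ 2) Hb).
  destruct b as [b1 b2]. unfold iota, Cinv, Csub, Cadd, Copp, RtoC, Cscal, Cmul in *; simpl in *.
  apply ceq; field; split; auto; lra.
Qed.

Lemma Wc_der b N t : Cder (Wc b N) t (W1c b N t).
Proof. unfold Wc, W1c. apply (Cder_ccsum (fun m t => Cscal ((cos (INR m * t) - cos (INR m * PI)) / INR m ^ 2) (iota b m))
   (fun m t => Cscal (- sin (INR m * t) / INR m) (iota b m))).
  intros m Hm. apply Cder_scalf. pose proof (INR_nz m Hm). auto_derive; auto. field; auto. Qed.

Lemma W1c_der b N t : Cder (W1c b N) t (Copp (Sc b N t)).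
Proof. unfold W1c, Sc. 
  replace (Copp (ccsum (fun m => Cscal (cos (INR m * t)) (iota b m)) N)) with
    (ccsum (fun m => Cscal (- cos (INR m * t)) (iota b m)) N).
  2:{ induction N. simpl. unfold C0; cring. rewrite !ccsum_S, IHN. destruct (iota b (S N)); unfold Copp, Cadd, Cscal; simpl; cring. }
  apply (Cder_ccsum (fun m t => Cscal (- sin (INR m * t) / INR m) (iota b m))
   (fun m t => Cscal (- cos (INR m * t)) (iota b m))).
  intros m Hm. apply Cder_scalf. pose proof (INR_nz m Hm). auto_derive; auto. field; auto. Qed.

Lemma Wc_pi b N : Wc b N PI = C0.
Proof. unfold Wc; induction N; auto. rewrite ccsum_S, IHN. destruct (iota b (S N)). unfold Rminus; rewrite Rplus_opp_r. unfold Rdiv; rewrite Rmult_0_l. unfold C0, Cadd, Cscal. cring. Qed.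

Lemma W1c_0 b N : W1c b N 0 = C0.
Proof. unfold W1c; induction N; auto. rewrite ccsum_S, IHN. rewrite Rmult_0_r, sin_0.
  destruct (iota b (S N)). unfold Rdiv; rewrite Ropp_0, Rmult_0_l. unfold C0, Cadd, Cscal. cring. Qed.

Lemma W1c_pi b N : W1c b N PI = C0.
Proof. unfold W1c; induction N; auto. rewrite ccsum_S, IHN.
  rewrite (sin_eq_0_1 (INR (S N) * PI)). 2:{ exists (Z.of_nat (S N)). rewrite <- INR_IZR_INZ. auto. }
  destruct (iota b (S N)). unfold Rdiv; rewrite Ropp_0, Rmult_0_l. unfold C0, Cadd, Cscal. cring. Qed.

Lemma Cder_val f x l l' : Cder f x l -> l = l' -> Cder f x l'.
Proof. intros H E; subst; auto. Qed.

Lemma Cder_opp f x l : Cder f x l -> Cder (fun t => Copp (f t)) x (Copp l).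
Proof. intros [H1 H2]; split; simpl; apply rd; apply dr in H1, H2; apply derivable_pt_lim_opp; auto. Qed.

Lemma Cder_sub f g x l m : Cder f x l -> Cder g x m -> Cder (fun t => Csub (f t) (g t)) x (Csub l m).
Proof. intros. unfold Csub. apply Cder_add; auto. apply Cder_opp; auto. Qed.

Lemma Cder_mulc f x l z : Cder f x l -> Cder (fun t => Cmul (f t) z) x (Cmul l z).
Proof. intros H. eapply Cder_val. apply (Cder_mul _ _ x _ _ H (Cder_const z x)).
  destruct l, z, (f x); unfold C0; cring. Qed.

Definition cosA c t := Ccos (aff c C0 t).
Definition sinA c t := Csin (aff c C0 t).
Definition cosB c t := Ccos (aff c (Cscal (- PI) c) t).
Definition sinB c t := Csin (aff c (Cscal (- PI) c) t).

(* particular solution, A and K arbitrary complex constants *)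
Definition Pp b c A K t :=
  Cadd (Cadd (Cadd (Copp (Cmul K (Cinv b))) (Cscal (- (PI - t) ^ 2 / 4) (Cinv b)))
        (Cscal (1/2) (Cmul (Cinv b) (Cinv b)))) (Cmul A (cosB c t)).
Definition Pp1 b c A t :=
  Cadd (Cscal ((PI - t) / 2) (Cinv b)) (Copp (Cmul A (Cmul c (sinB c t)))).
Definition Pp2 b c A t :=
  Cadd (Cscal (- / 2) (Cinv b)) (Copp (Cmul A (Cmul c (Cmul c (cosB c t))))).

Lemma Pp_der b c A K t : Cder (Pp b c A K) t (Pp1 b c A t).
Proof. unfold Pp, Pp1. eapply Cder_val.
  apply Cder_add. apply Cder_add. apply Cder_add. apply Cder_const.
  apply Cder_scalf. auto_derive; auto. apply Cder_const.
  apply Cder_cmul. apply Cder_cos_aff.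
  fold (sinB c t). destruct c, A, (Cinv b), (sinB (r,r0) t); unfold C0; apply ceq'; simpl; field.
Qed.

Lemma Pp1_der b c A t : Cder (Pp1 b c A) t (Pp2 b c A t).
Proof. unfold Pp1, Pp2. eapply Cder_val.
  apply Cder_add. apply Cder_scalf. auto_derive; auto.
  apply Cder_opp. apply Cder_cmul. apply Cder_cmul. apply Cder_sin_aff.
  fold (cosB c t). destruct c, A, (Cinv b), (cosB (r,r0) t); unfold C0; apply ceq'; simpl; field.
Qed.

Lemma Pp_ode b c A K t : Cmul c c = b -> b <> C0 ->
  Cadd (Pp2 b c A t) (Cmul b (Pp b c A K t)) = Copp (Cadd K (RtoC ((PI - t) ^ 2 / 4))).
Proof. intros Hc Hb. unfold Pp, Pp2. subst b.
  assert (Hc0 : c <> C0) by (intros E; apply Hb; rewrite E; unfold C0; cring).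
  assert (E1 : forall (a : R) z, Cscal a z = Cmul (RtoC a) z) by (intros a [z1 z2]; cring).
  rewrite !E1. 
  assert (E2 : RtoC (- (PI - t) ^ 2 / 4) = Copp (RtoC ((PI - t) ^ 2 / 4))) by (apply ceq'; simpl; field).
  assert (E3 : RtoC (- / 2) = Copp (Cinv (Cadd C1 C1))) by (apply ceq'; simpl; field).
  assert (E4 : RtoC (1/2) = Cinv (Cadd C1 C1)) by (apply ceq'; simpl; field).
  rewrite E2, E3, E4. field; try split; auto; unfold C0; intro H; inversion H; lra.
Qed.

Definition dd b c A N t := Csub (Wc b N t) (Pp b c A (Sc b N PI) t).
Definition dd1 b c A N t := Csub (W1c b N t) (Pp1 b c A t).
Definition dd2 b c A N t := Csub (Copp (Sc b N t)) (Pp2 b c A t).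

Lemma dd_der b c A N t : Cder (dd b c A N) t (dd1 b c A N t).
Proof. apply Cder_sub. apply Wc_der. apply Pp_der. Qed.
Lemma dd1_der b c A N t : Cder (dd1 b c A N) t (dd2 b c A N t).
Proof. apply Cder_sub. apply W1c_der. apply Pp1_der. Qed.

Lemma RtoC_sub a b : RtoC (a - b) = Csub (RtoC a) (RtoC b).
Proof. apply ceq'; simpl; ring. Qed.

Lemma dd_ode b c A N t : Cmul c c = b -> snd b <> 0 ->
  Cadd (dd2 b c A N t) (Cmul b (dd b c A N t)) = Copp (RtoC (eN N t)).
Proof. intros Hc Hb. assert (Hb0 : b <> C0) by (intros E; apply Hb; rewrite E; reflexivity).
  pose proof (Pp_ode b c A (Sc b N PI) t Hc Hb0) as E.
  unfold dd2, dd, eN. rewrite (Sc_I1 b N t Hb) at 1. rewrite RtoC_sub.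
  set (P2 := Pp2 b c A t) in *. set (P := Pp b c A (Sc b N PI) t) in *.
  assert (E' : P2 = Csub (Copp (Cadd (Sc b N PI) (RtoC ((PI - t) ^ 2 / 4)))) (Cmul b P)).
  { rewrite <- E. unfold Csub. ring. }
  rewrite E'. unfold Csub. ring.
Qed.

Definition Wr1 b c A N t := Csub (Cmul (dd b c A N t) (Copp (Cmul c (sinA c t)))) (Cmul (dd1 b c A N t) (cosA c t)).
Definition Wr2 b c A N t := Csub (Cmul (dd b c A N t) (Copp (Cmul c (sinB c t)))) (Cmul (dd1 b c A N t) (cosB c t)).

Lemma Wr1_der b c A N t : Cmul c c = b -> snd b <> 0 ->
  Cder (Wr1 b c A N) t (Cmul (RtoC (eN N t)) (cosA c t)).
Proof. intros Hc Hb. unfold Wr1. eapply Cder_val.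
  apply Cder_sub. apply Cder_mul. apply dd_der. apply Cder_opp, Cder_cmul, Cder_sin_aff.
  apply Cder_mul. apply dd1_der. apply Cder_cos_aff.
  fold (cosA c t) (sinA c t).
  pose proof (dd_ode b c A N t Hc Hb) as E.
  transitivity (Cmul (Copp (Cadd (dd2 b c A N t) (Cmul (Cmul c c) (dd b c A N t)))) (cosA c t)).
  unfold Csub; ring. rewrite Hc, E. ring.
Qed.

Lemma Wr2_der b c A N t : Cmul c c = b -> snd b <> 0 ->
  Cder (Wr2 b c A N) t (Cmul (RtoC (eN N t)) (cosB c t)).
Proof. intros Hc Hb. unfold Wr2. eapply Cder_val.
  apply Cder_sub. apply Cder_mul. apply dd_der. apply Cder_opp, Cder_cmul, Cder_sin_aff.
  apply Cder_mul. apply dd1_der. apply Cder_cos_aff.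
  fold (cosB c t) (sinB c t).
  pose proof (dd_ode b c A N t Hc Hb) as E.
  transitivity (Cmul (Copp (Cadd (dd2 b c A N t) (Cmul (Cmul c c) (dd b c A N t)))) (cosB c t)).
  unfold Csub; ring. rewrite Hc, E. ring.
Qed.

Lemma cosh_minus x y : cosh (x - y) = cosh x * cosh y - sinh x * sinh y.
Proof. unfold cosh, sinh. unfold Rminus. rewrite exp_plus, Ropp_plus_distr, Ropp_involutive, exp_plus. field. Qed.
Lemma sinh_minus x y : sinh (x - y) = sinh x * cosh y - cosh x * sinh y.
Proof. unfold cosh, sinh. unfold Rminus. rewrite exp_plus, Ropp_plus_distr, Ropp_involutive, exp_plus. field. Qed.

Lemma Csin_sub z w : Csub (Cmul (Csin z) (Ccos w)) (Cmul (Ccos z) (Csin w)) = Csin (Csub z w).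
Proof. destruct z as [z1 z2], w as [w1 w2]. unfold Csub, Cadd, Copp, Csin, Ccos, Cmul; simpl.
  change (z1 + - w1) with (z1 - w1). change (z2 + - w2) with (z2 - w2).
  rewrite sin_minus, cos_minus, cosh_minus, sinh_minus. apply ceq; ring. Qed.

Lemma Ccos_sub z w : Cadd (Cmul (Ccos z) (Ccos w)) (Cmul (Csin z) (Csin w)) = Ccos (Csub z w).
Proof. destruct z as [z1 z2], w as [w1 w2]. unfold Csub, Cadd, Copp, Csin, Ccos, Cmul; simpl.
  change (z1 + - w1) with (z1 - w1). change (z2 + - w2) with (z2 - w2).
  rewrite sin_minus, cos_minus, cosh_minus, sinh_minus. apply ceq; ring. Qed.

Lemma elim_id b c A N t :
  Csub (Cmul (Wr1 b c A N t) (cosB c t)) (Cmul (Wr2 b c A N t) (cosA c t)) =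
  Copp (Cmul (Cmul c (dd b c A N t)) (Csin (Cscal PI c))).
Proof. unfold Wr1, Wr2.
  assert (E : Csin (Cscal PI c) = Csub (Cmul (sinA c t) (cosB c t)) (Cmul (cosA c t) (sinB c t))).
  { unfold sinA, cosB, cosA, sinB. rewrite Csin_sub. f_equal. destruct c; unfold aff, Cscal, Csub, Cadd, Copp, C0; simpl; apply ceq; ring. }
  rewrite E. unfold Csub. ring. Qed.

Lemma sinA_0 c : sinA c 0 = C0.
Proof. destruct c; unfold sinA, aff, Csin, Cscal, Cadd, C0; simpl. rewrite !Rmult_0_l, !Rplus_0_l, sin_0.
  unfold sinh. rewrite Ropp_0, exp_0. apply ceq; field. Qed.

Lemma sinB_pi c : sinB c PI = C0.
Proof. destruct c; unfold sinB, aff, Csin, Cscal, Cadd, C0; simpl.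
  replace (PI * r + - PI * r) with 0 by ring. replace (PI * r0 + - PI * r0) with 0 by ring. rewrite sin_0.
  unfold sinh. rewrite Ropp_0, exp_0. apply ceq; field. Qed.

Lemma sinB_0 c : sinB c 0 = Copp (Csin (Cscal PI c)).
Proof. destruct c; unfold sinB, aff, Csin, Cscal, Cadd, Copp; simpl. rewrite !Rmult_0_l, !Rplus_0_l.
  replace (- PI * r) with (- (PI * r)) by ring. replace (- PI * r0) with (- (PI * r0)) by ring.
  rewrite sin_neg, cos_neg. unfold cosh, sinh. rewrite Ropp_involutive. apply ceq; field. Qed.

Definition A0 b c := Cdiv (RtoC (- PI / 2)) (Cmul b (Cmul c (Csin (Cscal PI c)))).

Lemma Pp1_0 b c : b <> C0 -> c <> C0 -> Csin (Cscal PI c) <> C0 -> Pp1 b c (A0 b c) 0 = C0.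
Proof. intros Hb Hc Hs. unfold Pp1, A0. rewrite sinB_0.
  assert (E1 : forall (a : R) z, Cscal a z = Cmul (RtoC a) z) by (intros a [z1 z2]; cring).
  rewrite E1. assert (E2 : RtoC ((PI - 0)/2) = Copp (RtoC (- PI / 2))) by (apply ceq'; simpl; field).
  rewrite E2. unfold Cdiv. field. auto.
Qed.

Lemma Pp1_pi b c A : Pp1 b c A PI = C0.
Proof. unfold Pp1. rewrite sinB_pi. replace ((PI - PI)/2) with 0 by field. destruct (Cinv b), c, A; unfold C0; cring. Qed.

Lemma Wr1_0 b c N : b <> C0 -> c <> C0 -> Csin (Cscal PI c) <> C0 -> Wr1 b c (A0 b c) N 0 = C0.
Proof. intros. unfold Wr1, dd1. rewrite sinA_0, W1c_0, Pp1_0 by auto. unfold C0, Csub; cring. Qed.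

Lemma Wr2_pi b c A N : Wr2 b c A N PI = C0.
Proof. unfold Wr2, dd1. rewrite sinB_pi, W1c_pi, Pp1_pi. unfold C0, Csub; cring. Qed.

Definition cn (z : Cplx) := Rabs (fst z) + Rabs (snd z).

Lemma cn_pos z : 0 <= cn z.
Proof. unfold cn; pose proof (Rabs_pos (fst z)); pose proof (Rabs_pos (snd z)); lra. Qed.

Lemma cn_add z w : cn (Cadd z w) <= cn z + cn w.
Proof. destruct z, w; unfold cn, Cadd; simpl. pose proof (Rabs_triang r r1). pose proof (Rabs_triang r0 r2). lra. Qed.

Lemma cn_opp z : cn (Copp z) = cn z.
Proof. destruct z; unfold cn, Copp; simpl. rewrite !Rabs_Ropp; auto. Qed.

Lemma cn_sub z w : cn (Csub z w) <= cn z + cn w.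
Proof. unfold Csub. rewrite <- (cn_opp w). apply cn_add. Qed.

Lemma cn_mul z w : cn (Cmul z w) <= cn z * cn w.
Proof. destruct z as [a b], w as [c d]; unfold cn, Cmul; simpl.
  pose proof (Rabs_triang (a*c) (- (b*d))). pose proof (Rabs_triang (a*d) (b*c)).
  rewrite Rabs_Ropp in H. rewrite !Rabs_mult in *.
  pose proof (Rabs_pos a); pose proof (Rabs_pos b); pose proof (Rabs_pos c); pose proof (Rabs_pos d).
  unfold Rminus. nra. Qed.

Lemma cn_RtoC x : cn (RtoC x) = Rabs x.
Proof. unfold cn, RtoC; simpl. rewrite Rabs_R0; ring. Qed.

Lemma exp_le x y : x <= y -> exp x <= exp y.
Proof. intros [H|H]. left; apply exp_increasing; auto. subst; lra. Qed.

Lemma cosh_le x : Rabs (cosh x) <= exp (Rabs x).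
Proof. unfold cosh. pose proof (exp_pos x). pose proof (exp_pos (-x)).
  assert (exp x <= exp (Rabs x)) by (apply exp_le, Rle_abs).
  assert (exp (-x) <= exp (Rabs x)) by (apply exp_le; rewrite <- Rabs_Ropp; apply Rle_abs).
  rewrite Rabs_right; lra. Qed.

Lemma sinh_le x : Rabs (sinh x) <= exp (Rabs x).
Proof. unfold sinh. pose proof (exp_pos x). pose proof (exp_pos (-x)).
  assert (exp x <= exp (Rabs x)) by (apply exp_le, Rle_abs).
  assert (exp (-x) <= exp (Rabs x)) by (apply exp_le; rewrite <- Rabs_Ropp; apply Rle_abs).
  apply Rabs_le; lra. Qed.

Lemma Ccos_cn z : cn (Ccos z) <= 2 * exp (Rabs (snd z)).
Proof. destruct z as [a b]; unfold cn, Ccos; simpl. rewrite Rabs_Ropp, !Rabs_mult.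
  pose proof (cosh_le b). pose proof (sinh_le b). pose proof (COS_bound a). pose proof (SIN_bound a).
  assert (Rabs (cos a) <= 1) by (apply Rabs_le; lra). assert (Rabs (sin a) <= 1) by (apply Rabs_le; lra).
  pose proof (Rabs_pos (cos a)); pose proof (Rabs_pos (sin a)); pose proof (Rabs_pos (cosh b)); pose proof (Rabs_pos (sinh b)).
  nra. Qed.

Definition Mc (c : Cplx) := 2 * exp (Rabs (snd c) * PI).

Lemma cosA_cn c t : 0 <= t <= PI -> cn (cosA c t) <= Mc c.
Proof. intros H. unfold cosA, Mc. eapply Rle_trans. apply Ccos_cn. apply Rmult_le_compat_l; [lra|].
  apply exp_le. destruct c; unfold aff, Cscal, Cadd, C0; simpl. rewrite Rplus_0_r, Rabs_mult, (Rabs_right t) by lra.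
  rewrite Rmult_comm. apply Rmult_le_compat_l; auto using Rabs_pos; lra. Qed.

Lemma cosB_cn c t : 0 <= t <= PI -> cn (cosB c t) <= Mc c.
Proof. intros H. unfold cosB, Mc. eapply Rle_trans. apply Ccos_cn. apply Rmult_le_compat_l; [lra|].
  apply exp_le. destruct c; unfold aff, Cscal, Cadd, C0; simpl.
  replace (t * r0 + - PI * r0) with ((t - PI) * r0) by ring. rewrite Rabs_mult, (Rabs_left1 (t - PI)) by lra.
  rewrite Rmult_comm. apply Rmult_le_compat_l; auto using Rabs_pos; lra. Qed.

Lemma Mc_pos c : 0 < Mc c.
Proof. unfold Mc. pose proof (exp_pos (Rabs (snd c) * PI)). lra. Qed.

Lemma mvt_c (F : R -> Cplx) (e : R -> R) (g : R -> Cplx) a b eps M :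
  a <= b -> (forall s, a <= s <= b -> Cder F s (Cmul (RtoC (e s)) (g s))) ->
  (forall s, a <= s <= b -> Rabs (e s) <= eps) -> (forall s, a <= s <= b -> cn (g s) <= M) ->
  cn (Csub (F b) (F a)) <= 2 * (b - a) * eps * M.
Proof. intros Hab HD He Hg. destruct Hab as [Hab|Hab].
  2:{ subst. unfold cn, Csub, Cadd, Copp; simpl. rewrite !Rplus_opp_r, Rabs_R0.
      assert (0 <= M) by (eapply Rle_trans; [apply cn_pos|apply (Hg b); lra]). 
      assert (0 <= eps) by (eapply Rle_trans; [apply Rabs_pos|apply (He b); lra]). nra. }
  assert (0 <= M) by (eapply Rle_trans; [apply cn_pos|apply (Hg b); lra]).
  assert (0 <= eps) by (eapply Rle_trans; [apply Rabs_pos|apply (He b); lra]).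
  destruct (MVT_cor2 (fun t => fst (F t)) (fun t => fst (Cmul (RtoC (e t)) (g t))) a b Hab) as [x1 [E1 H1]].
  { intros s Hs. apply dr. apply (HD s Hs). }
  destruct (MVT_cor2 (fun t => snd (F t)) (fun t => snd (Cmul (RtoC (e t)) (g t))) a b Hab) as [x2 [E2 H2]].
  { intros s Hs. apply dr. apply (HD s Hs). }
  unfold cn, Csub, Cadd, Copp; simpl. fold (fst (F b) - fst (F a)) (snd (F b) - snd (F a)). rewrite E1, E2.
  simpl. rewrite !Rmult_0_l, !Rminus_0_r, !Rplus_0_r, !Rabs_mult.
  assert (K1 : Rabs (e x1) * Rabs (fst (g x1)) <= eps * M).
  { pose proof (Hg x1 ltac:(lra)). unfold cn in H3. pose proof (Rabs_pos (snd (g x1))).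
    apply Rmult_le_compat; auto using Rabs_pos. apply He; lra. lra. }
  assert (K2 : Rabs (e x2) * Rabs (snd (g x2)) <= eps * M).
  { pose proof (Hg x2 ltac:(lra)). unfold cn in H3. pose proof (Rabs_pos (fst (g x2))).
    apply Rmult_le_compat; auto using Rabs_pos. apply He; lra. lra. }
  rewrite !(Rabs_right (b - a)) by lra.
  pose proof (Rabs_pos (e x1)). nra.
Qed.

Definition Lc b c A t := Cadd (Cscal (1/2) (Cinv b)) (Cmul (Cmul b A) (cosB c t)).

Lemma Sc_decomp b c A N t : Cmul c c = b -> snd b <> 0 ->
  Sc b N t = Cadd (Cadd (RtoC (eN N t)) (Cmul b (dd b c A N t))) (Lc b c A t).
Proof. intros Hc Hb. assert (Hb0 : b <> C0) by (intros E; apply Hb; rewrite E; reflexivity).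
  rewrite (Sc_I1 b N t Hb) at 1. unfold dd, Lc, Pp, eN.
  assert (E1 : forall (a : R) z, Cscal a z = Cmul (RtoC a) z) by (intros a [z1 z2]; cring).
  rewrite !E1, RtoC_sub.
  assert (E2 : RtoC (- (PI - t) ^ 2 / 4) = Copp (RtoC ((PI - t) ^ 2 / 4))) by (apply ceq'; simpl; field).
  rewrite E2. unfold Csub. field. auto.
Qed.

Lemma core b c : Cmul c c = b -> snd b <> 0 -> Csin (Cscal PI c) <> C0 ->
  forall eps, 0 < eps -> exists N0, forall N, (N0 <= N)%nat -> forall t, 0 <= t <= PI ->
  cn (Csub (Sc b N t) (Lc b c (A0 b c) t)) <= eps.
Proof. intros Hc Hb Hs eps He.
  assert (Hb0 : b <> C0) by (intros E; apply Hb; rewrite E; reflexivity).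
  assert (Hc0 : c <> C0) by (intros E; apply Hb0; rewrite <- Hc, E; unfold C0; cring).
  set (s := Csin (Cscal PI c)) in *. set (q := Cinv (Cmul c s)). set (M := Mc c).
  pose proof (Mc_pos c). fold M in H. pose proof (cosA_cn c) as HcA. pose proof (cosB_cn c) as HcB. fold M in HcA, HcB. clearbody M. pose proof (cn_pos q). pose proof (cn_pos b). pose proof PI_gt3.
  set (Kd := 1 + 4 * PI * M * M * cn b * cn q).
  assert (HK : 1 <= Kd).
  { unfold Kd. assert (0 <= 4 * PI * M * M * cn b * cn q).
    { do 4 (apply Rmult_le_pos; [|lra]). lra. } lra. }
  destruct (eN_unif (eps / Kd) ltac:(apply Rdiv_lt_0_compat; lra)) as [N0 HN0].
  exists N0. intros N HN t Ht. set (e' := eps / Kd) in *.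
  assert (He' : 0 < e') by (apply Rdiv_lt_0_compat; lra).
  set (A := A0 b c).
  assert (B1 : cn (Wr1 b c A N t) <= 2 * PI * e' * M).
  { pose proof (mvt_c (Wr1 b c A N) (eN N) (cosA c) 0 t e' M ltac:(lra)) as K.
    rewrite Wr1_0 in K by auto. 
    replace (Csub (Wr1 b c A N t) C0) with (Wr1 b c A N t) in K by (destruct (Wr1 b c A N t); unfold C0; cring).
    eapply Rle_trans. apply K.
    - intros; apply Wr1_der; auto.
    - intros; apply HN0; auto; lra.
    - intros; apply HcA; lra.
    - assert (0 <= e' * M) by (apply Rmult_le_pos; lra). nra. }
  assert (B2 : cn (Wr2 b c A N t) <= 2 * PI * e' * M).
  { pose proof (mvt_c (Wr2 b c A N) (eN N) (cosB c) t PI e' M ltac:(lra)) as K.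
    rewrite Wr2_pi in K.
    replace (Csub C0 (Wr2 b c A N t)) with (Copp (Wr2 b c A N t)) in K by (destruct (Wr2 b c A N t); unfold C0; cring).
    rewrite cn_opp in K. eapply Rle_trans. apply K.
    - intros; apply Wr2_der; auto.
    - intros; apply HN0; auto; lra.
    - intros; apply HcB; lra.
    - assert (0 <= e' * M) by (apply Rmult_le_pos; lra). nra. }
  assert (Ed : dd b c A N t = Cmul (Copp (Csub (Cmul (Wr1 b c A N t) (cosB c t)) (Cmul (Wr2 b c A N t) (cosA c t)))) q).
  { rewrite elim_id. fold s. unfold q. field. split; auto. }
  assert (Bd : cn (dd b c A N t) <= 4 * PI * e' * M * M * cn q).
  { rewrite Ed. eapply Rle_trans. apply cn_mul. rewrite cn_opp. apply Rmult_le_compat_r; auto.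
    eapply Rle_trans. apply cn_sub. eapply Rle_trans. apply Rplus_le_compat; apply cn_mul.
    pose proof (HcA t Ht). pose proof (HcB t Ht).
    pose proof (cn_pos (Wr1 b c A N t)). pose proof (cn_pos (Wr2 b c A N t)).
    pose proof (cn_pos (cosA c t)). pose proof (cn_pos (cosB c t)).
    apply Rle_trans with ((2 * PI * e' * M) * M + (2 * PI * e' * M) * M).
    apply Rplus_le_compat; apply Rmult_le_compat; auto. lra. }
  rewrite (Sc_decomp b c A N t Hc Hb).
  replace (Csub (Cadd (Cadd (RtoC (eN N t)) (Cmul b (dd b c A N t))) (Lc b c A t)) (Lc b c A t))
    with (Cadd (RtoC (eN N t)) (Cmul b (dd b c A N t))) by (unfold Csub; ring).
  eapply Rle_trans. apply cn_add. rewrite cn_RtoC. eapply Rle_trans. apply Rplus_le_compat.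
  apply (HN0 N HN t Ht). apply cn_mul.
  apply Rle_trans with (e' + cn b * (4 * PI * e' * M * M * cn q)).
  apply Rplus_le_compat_l. apply Rmult_le_compat_l; auto.
  right. transitivity (e' * Kd). unfold Kd; ring. unfold e'; field; lra.
Qed.

Lemma cos_abs r z : cos (r * Rabs z) = cos (r * z).
Proof. destruct (Rle_dec 0 z). rewrite Rabs_pos_eq; auto.
  rewrite Rabs_left by lra. replace (r * - z) with (- (r * z)) by ring. apply cos_neg. Qed.

Definition th1 x y := PI * Rabs (x - y) / 2.
Definition th2 x y := PI - PI * Rabs (x + y) / 2.

Lemma wo_prod j x y : wo (S j) x * wo (S j) y =
  (cos (INR (2 * S j) * th1 x y) - cos (INR (2 * S j) * th2 x y)) / 2.
Proof. unfold wo, th1, th2. rewrite mult_INR. set (K := INR (S j)).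
  replace (INR 2 * K * (PI * Rabs (x - y) / 2)) with ((K * PI) * Rabs (x - y)) by (simpl; field).
  rewrite cos_abs.
  replace (INR 2 * K * (PI - PI * Rabs (x + y) / 2)) with (- ((K * PI) * Rabs (x + y)) + 2 * INR (S j) * PI) by (unfold K; simpl; field).
  rewrite cos_period, cos_neg, cos_abs.
  replace (K * PI * (x - y)) with (K * PI * x - K * PI * y) by ring.
  replace (K * PI * (x + y)) with (K * PI * x + K * PI * y) by ring.
  rewrite cos_minus, cos_plus. field. Qed.

Lemma we_prod j x y : we (S j) x * we (S j) y =
  (cos (INR (S (2 * j)) * th1 x y) - cos (INR (S (2 * j)) * th2 x y)) / 2.
Proof. unfold we, th1, th2. rewrite (S_INR (2*j)), (mult_INR 2 j), (S_INR j). set (K := INR j).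
  replace ((INR 2 * K + 1) * (PI * Rabs (x - y) / 2)) with (((K + 1 - 1/2) * PI) * Rabs (x - y)) by (simpl; field).
  rewrite cos_abs.
  replace ((INR 2 * K + 1) * (PI - PI * Rabs (x + y) / 2)) with ((PI - ((K + 1 - 1/2) * PI) * Rabs (x + y)) + 2 * INR j * PI) by (unfold K; simpl; field).
  rewrite cos_period, Rtrigo_facts.cos_pi_minus, cos_abs.
  replace ((K + 1 - 1/2) * PI * (x - y)) with ((K + 1 - 1/2) * PI * x - (K + 1 - 1/2) * PI * y) by ring.
  replace ((K + 1 - 1/2) * PI * (x + y)) with ((K + 1 - 1/2) * PI * x + (K + 1 - 1/2) * PI * y) by ring.
  rewrite cos_minus, cos_plus. field. Qed.

Definition bb D nu Rr : Cplx := Cscal (4 / PI ^ 2) (pplus2 D nu Rr).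
Definition kap D nu Rr := 4 / (PI ^ 2 * D * nu * snd (pplus2 D nu Rr)).

Lemma sqrtX_pos D nu Rr : discr D nu Rr < 0 -> 0 < sqrt (4 * D * nu * (1 + D * Rr) - D ^ 2).
Proof. intros H. unfold discr in H. apply sqrt_lt_R0. lra. Qed.

Lemma a2_pos D nu Rr : 0 < D -> 0 < nu -> discr D nu Rr < 0 -> 0 < snd (pplus2 D nu Rr).
Proof. intros. unfold pplus2; simpl. pose proof (sqrtX_pos D nu Rr H1).
  apply Rmult_lt_0_compat; auto. apply Rdiv_lt_0_compat; [lra|]. nra. Qed.

Lemma inv_lamg D nu Rr mu : 0 < D -> 0 < nu -> discr D nu Rr < 0 ->
  / (1 + D * Rr - D * PI ^ 2 * mu ^ 2 + D * nu * PI ^ 4 * mu ^ 4) =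
  kap D nu Rr * snd (Cinv (Csub (RtoC ((2 * mu) ^ 2)) (bb D nu Rr))).
Proof. intros HD Hn Hd. pose proof (sqrtX_pos D nu Rr Hd) as HS.
  assert (HX : 0 <= 4 * D * nu * (1 + D * Rr) - D ^ 2) by (unfold discr in Hd; lra).
  pose proof (sqrt_sqrt _ HX) as ES. set (S := sqrt (4 * D * nu * (1 + D * Rr) - D ^ 2)) in *.
  pose proof PI_gt3.
  unfold kap, bb, pplus2, Cinv, Csub, Cadd, Copp, RtoC, Cscal; cbn [fst snd]. fold S.
  set (m2 := (2 * mu) ^ 2).
  assert (Hpos : 0 < (m2 + - (4 / PI ^ 2 * (1 / (2 * nu)))) ^ 2 + (0 + - (4 / PI ^ 2 * (1 / (2 * D * nu) * S))) ^ 2).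
  { assert (0 < (4 / PI ^ 2 * (1 / (2 * D * nu) * S))).
    { apply Rmult_lt_0_compat. apply Rdiv_lt_0_compat; [lra|]. apply pow_lt; lra.
      apply Rmult_lt_0_compat; auto. apply Rdiv_lt_0_compat; [lra|]. nra. }
    pose proof (pow2_ge_0 (m2 + - (4 / PI ^ 2 * (1 / (2 * nu))))). nra. }
  assert (E : 1 + D * Rr - D * PI ^ 2 * mu ^ 2 + D * nu * PI ^ 4 * mu ^ 4 =
     D * nu * PI ^ 4 / 16 * ((m2 + - (4 / PI ^ 2 * (1 / (2 * nu)))) ^ 2 + (0 + - (4 / PI ^ 2 * (1 / (2 * D * nu) * S))) ^ 2)).
  { unfold m2. field_simplify; try lra. 
    replace (S ^ 2) with (S * S) by ring. rewrite ES. field. lra. }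
  rewrite E. field. repeat split; try lra. pose proof (pow2_ge_0 ((m2 * (PI ^ 2 * (2 * nu)) + -4) * D)). assert (0 < (- (4 * S)) ^ 2) by nra. lra.
Qed.

Definition Fv D nu Rr x y m :=
  (cos (INR m * th1 x y) - cos (INR m * th2 x y)) * snd (iota (bb D nu Rr) m).

Lemma term_id D nu Rr x y j : 0 < D -> 0 < nu -> discr D nu Rr < 0 ->
  series_term D nu Rr x y (S j) = kap D nu Rr / 2 * (Fv D nu Rr x y (S (2 * j)) + Fv D nu Rr x y (2 * S j)).
Proof. intros HD Hn Hd. unfold series_term, Fv. unfold Rdiv at 1 2.
  rewrite wo_prod, we_prod. unfold lamo, lame.
  rewrite (inv_lamg D nu Rr (INR (S j))) by auto.
  rewrite (inv_lamg D nu Rr (INR (S j) - 1/2)) by auto.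
  unfold iota. replace ((2 * INR (S j)) ^ 2) with (INR (2 * S j) ^ 2) by (rewrite mult_INR; replace (INR 2) with 2 by (simpl; ring); ring).
  replace ((2 * (INR (S j) - 1/2)) ^ 2) with (INR (S (2 * j)) ^ 2) by (rewrite (S_INR (2*j)), (mult_INR 2 j), (S_INR j); replace (INR 2) with 2 by (simpl; ring); field).
  field.
Qed.

Lemma snd_ccsum f N : snd (ccsum f N) = csum (fun m => snd (f m)) N.
Proof. induction N; simpl; auto. rewrite IHN; auto. Qed.

Lemma snd_Cscal a z : snd (Cscal a z) = a * snd z.
Proof. reflexivity. Qed.

Lemma partial_id D nu Rr x y N : 0 < D -> 0 < nu -> discr D nu Rr < 0 ->
  sum_f_R0 (fun n => series_term D nu Rr x y (S n)) N =
  kap D nu Rr / 2 * (snd (Sc (bb D nu Rr) (2 * N + 2) (th1 x y)) - snd (Sc (bb D nu Rr) (2 * N + 2) (th2 x y))).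
Proof. intros HD Hn Hd. unfold Sc. rewrite !snd_ccsum. induction N.
- simpl sum_f_R0. rewrite term_id by auto. simpl. unfold Fv. simpl. ring.
- rewrite tech5, IHN, term_id by auto.
  replace (2 * S N + 2)%nat with (S (S (2 * N + 2))) by lia.
  rewrite !csum_S.
  replace (2 * S (S N))%nat with (S (S (2 * N + 2))) by lia.
  replace (S (2 * S N)) with (S (2 * N + 2)) by lia. unfold Fv. rewrite !snd_Cscal. ring.
Qed.

Lemma Ccos_opp z : Ccos (Copp z) = Ccos z.
Proof. destruct z as [a b]; unfold Ccos, Copp; simpl. rewrite cos_neg, sin_neg.
  unfold cosh, sinh. rewrite Ropp_involutive. apply ceq; field. Qed.

Lemma Ccos_scal_abs r p : Ccos (Cscal (Rabs r) p) = Ccos (Cscal r p).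
Proof. destruct (Rle_dec 0 r). rewrite Rabs_pos_eq; auto. rewrite Rabs_left by lra.
  rewrite <- (Ccos_opp (Cscal r p)). f_equal. destruct p; unfold Cscal, Copp; simpl; apply ceq; ring. Qed.

Definition cc (p : Cplx) : Cplx := Cscal (2 / PI) p.

Lemma cosB_th1 p x y : cosB (cc p) (th1 x y) = Ccos (Csub (Cscal 2 p) (Cscal (Rabs (x - y)) p)).
Proof. unfold cosB, th1. rewrite <- Ccos_opp. f_equal. destruct p; unfold aff, cc, Cscal, Csub, Cadd, Copp; simpl.
  apply ceq; field; apply PI_neq0. Qed.

Lemma cosB_th2 p x y : cosB (cc p) (th2 x y) = Ccos (Cscal (x + y) p).
Proof. unfold cosB, th2. rewrite <- Ccos_scal_abs, <- Ccos_opp. f_equal. destruct p; unfold aff, cc, Cscal, Csub, Cadd, Copp; simpl.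
  apply ceq; field; apply PI_neq0. Qed.

Lemma sc_eq p : Csin (Cscal PI (cc p)) = Csin (Cscal 2 p).
Proof. f_equal. destruct p; unfold cc, Cscal; simpl. apply ceq; field; apply PI_neq0. Qed.

Lemma cc_sq D nu Rr p : Cmul p p = pplus2 D nu Rr -> Cmul (cc p) (cc p) = bb D nu Rr.
Proof. intros H. unfold bb. rewrite <- H. destruct p; unfold cc, Cscal, Cmul; simpl. apply ceq; field; apply PI_neq0. Qed.

Lemma sinh_0_inv x : sinh x = 0 -> x = 0.
Proof. unfold sinh. intros H. assert (exp x = exp (-x)) by lra.
  apply exp_inv in H0. lra. Qed.

Lemma cosh_pos x : 0 < cosh x.
Proof. unfold cosh. pose proof (exp_pos x). pose proof (exp_pos (-x)). lra. Qed.

Lemma Csin2p_nz D nu Rr p : 0 < D -> 0 < nu -> discr D nu Rr < 0 -> Cmul p p = pplus2 D nu Rr ->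
  Csin (Cscal 2 p) <> C0.
Proof. intros HD Hn Hd Hp E. pose proof (a2_pos D nu Rr HD Hn Hd) as Ha. rewrite <- Hp in Ha.
  destruct p as [p1 p2]. unfold Csin, Cscal, C0 in E; simpl in E. injection E; intros E2 E1.
  pose proof (cosh_pos (2 * p2)).
  assert (Hs : sin (2 * p1) = 0) by (apply Rmult_integral in E1; destruct E1; lra).
  assert (Hc : cos (2 * p1) <> 0) by (intros Hc; pose proof (sin2_cos2 (2*p1)); rewrite Hs, Hc in H0; unfold Rsqr in H0; lra).
  apply Rmult_integral in E2; destruct E2 as [E2|E2]; [contradiction|].
  apply sinh_0_inv in E2. assert (p2 = 0) by lra. subst. unfold Cmul in Ha; simpl in Ha. lra.
Qed.

Lemma snd_RtoC_mul r z : snd (Cmul (RtoC r) z) = r * snd z.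
Proof. destruct z; unfold Cmul, RtoC; simpl; ring. Qed.

Lemma G_id D nu Rr p x y : 0 < D -> 0 < nu -> discr D nu Rr < 0 -> Cmul p p = pplus2 D nu Rr ->
  kap D nu Rr / 2 * (snd (Lc (bb D nu Rr) (cc p) (A0 (bb D nu Rr) (cc p)) (th1 x y)) -
                    snd (Lc (bb D nu Rr) (cc p) (A0 (bb D nu Rr) (cc p)) (th2 x y))) = Gfun D nu Rr p x y.
Proof. intros HD Hn Hd Hp. pose proof (a2_pos D nu Rr HD Hn Hd) as Ha. pose proof PI_gt3.
  pose proof (Csin2p_nz D nu Rr p HD Hn Hd Hp) as Hs.
  set (b := bb D nu Rr). set (s := Csin (Cscal 2 p)) in *.
  assert (Hb : b <> C0).
  { intros E. assert (E2 : snd b = 0) by (rewrite E; reflexivity). unfold b, bb in E2. rewrite snd_Cscal in E2.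
     assert (0 < 4 / PI ^ 2 * snd (pplus2 D nu Rr)) by (apply Rmult_lt_0_compat; auto; apply Rdiv_lt_0_compat; [lra| apply pow_lt; lra]); lra. }
  assert (Hp0 : p <> C0) by (intros E; rewrite E in Hp; rewrite <- Hp in Ha; unfold Cmul, C0 in Ha; simpl in Ha; lra).
  assert (Hr : RtoC (2 / PI) <> C0) by (unfold RtoC, C0; intros E; injection E; intros; 
     assert (0 < 2/PI) by (apply Rdiv_lt_0_compat; lra); lra).
  assert (E1 : forall (a : R) z, Cscal a z = Cmul (RtoC a) z) by (intros a [z1 z2]; cring).
  assert (EbA : Cmul b (A0 b (cc p)) = Cmul (RtoC (- PI ^ 2 / 4)) (Cinv (Cmul p s))).
  { unfold A0. rewrite sc_eq. fold s. unfold cc. rewrite E1.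
    replace (RtoC (- PI / 2)) with (Cmul (RtoC (- PI ^ 2 / 4)) (RtoC (2 / PI)))
      by (apply ceq'; simpl; field; lra).
    unfold Cdiv. field. repeat split; auto. }
  assert (EL : forall t1 t2, snd (Lc b (cc p) (A0 b (cc p)) t1) - snd (Lc b (cc p) (A0 b (cc p)) t2) =
     snd (Cmul (Cmul b (A0 b (cc p))) (Csub (cosB (cc p) t1) (cosB (cc p) t2)))).
  { intros. unfold Lc. destruct (Cmul b (A0 b (cc p))), (cosB (cc p) t1), (cosB (cc p) t2), (Cscal (1/2) (Cinv b)).
    unfold Cadd, Cmul, Csub, Copp; simpl; ring. }
  rewrite EL, EbA, cosB_th1, cosB_th2. unfold Gfun. unfold Cdiv. fold s.
  replace (Cmul (Cmul (RtoC (- PI ^ 2 / 4)) (Cinv (Cmul p s)))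
             (Csub (Ccos (Csub (Cscal 2 p) (Cscal (Rabs (x - y)) p))) (Ccos (Cscal (x + y) p))))
    with (Cmul (RtoC (PI ^ 2 / 4)) (Cmul (Cadd (Copp (Ccos (Csub (Cscal 2 p) (Cscal (Rabs (x - y)) p)))) (Ccos (Cscal (x + y) p))) (Cinv (Cmul p s)))).
  2:{ replace (RtoC (- PI ^ 2 / 4)) with (Copp (RtoC (PI ^ 2 / 4))) by (apply ceq'; simpl; field).
      unfold Csub. ring. }
  rewrite snd_RtoC_mul.
  match goal with |- _ * (_ * snd ?z) = _ => set (Z := z) end.
  assert (EI : Im (Csub (pplus2 D nu Rr) (pminus2 D nu Rr)) = 2 * snd (pplus2 D nu Rr))
    by (unfold Im, pplus2, pminus2, Csub, Cadd, Copp; simpl; ring).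
  rewrite EI. unfold Im, kap. field. repeat split; lra.
Qed.

Lemma th1_range x y : inI x -> inI y -> 0 <= th1 x y <= PI.
Proof. unfold inI, th1; intros. pose proof PI_gt3. assert (Rabs (x - y) <= 2) by (apply Rabs_le; lra).
  pose proof (Rabs_pos (x - y)). split; nra. Qed.

Lemma th2_range x y : inI x -> inI y -> 0 <= th2 x y <= PI.
Proof. unfold inI, th2; intros. pose proof PI_gt3. assert (Rabs (x + y) <= 2) by (apply Rabs_le; lra).
  pose proof (Rabs_pos (x + y)). split; nra. Qed.

Lemma snd_le_cn z w : Rabs (snd z - snd w) <= cn (Csub z w).
Proof. destruct z, w; unfold cn, Csub, Cadd, Copp; simpl. pose proof (Rabs_pos (r + - r1)). unfold Rminus. lra. Qed.

Lemma part1 D nu Rr p : 0 < D -> 0 < nu -> discr D nu Rr < 0 -> Cmul p p = pplus2 D nu Rr ->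
  forall x y, inI x -> inI y ->
  infinite_sum (fun n => series_term D nu Rr x y (S n)) (Gfun D nu Rr p x y).
Proof. intros HD Hn Hd Hp x y Hx Hy eps He.
  pose proof (a2_pos D nu Rr HD Hn Hd) as Ha. pose proof PI_gt3.
  assert (Hk : 0 < kap D nu Rr).
  { unfold kap. apply Rdiv_lt_0_compat; [lra|]. assert (0 < PI ^ 2) by (apply pow_lt; lra). apply Rmult_lt_0_compat; [apply Rmult_lt_0_compat; [apply Rmult_lt_0_compat|]|]; auto. }
  set (b := bb D nu Rr). set (c := cc p).
  assert (Hc : Cmul c c = b) by (apply cc_sq; auto).
  assert (Hb : snd b <> 0).
  { unfold b, bb. rewrite snd_Cscal. assert (0 < 4 / PI ^ 2) by (apply Rdiv_lt_0_compat; [lra|apply pow_lt; lra]). nra. }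
  assert (Hs : Csin (Cscal PI c) <> C0) by (unfold c; rewrite sc_eq; apply (Csin2p_nz D nu Rr); auto).
  set (e' := eps / (2 * (kap D nu Rr + 1))).
  assert (He' : 0 < e') by (apply Rdiv_lt_0_compat; lra).
  destruct (core b c Hc Hb Hs e' He') as [N0 HN0].
  exists N0. intros n Hnn. unfold R_dist. rewrite partial_id by auto. rewrite <- G_id with (p := p) by auto.
  fold b c.
  pose proof (HN0 (2 * n + 2)%nat ltac:(lia) (th1 x y) (th1_range x y Hx Hy)) as K1.
  pose proof (HN0 (2 * n + 2)%nat ltac:(lia) (th2 x y) (th2_range x y Hx Hy)) as K2.
  pose proof (snd_le_cn (Sc b (2 * n + 2) (th1 x y)) (Lc b c (A0 b c) (th1 x y))) as L1.
  pose proof (snd_le_cn (Sc b (2 * n + 2) (th2 x y)) (Lc b c (A0 b c) (th2 x y))) as L2.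
  set (s1 := snd (Sc b (2 * n + 2) (th1 x y))) in *. set (s2 := snd (Sc b (2 * n + 2) (th2 x y))) in *.
  set (l1 := snd (Lc b c (A0 b c) (th1 x y))) in *. set (l2 := snd (Lc b c (A0 b c) (th2 x y))) in *.
  replace (kap D nu Rr / 2 * (s1 - s2) - kap D nu Rr / 2 * (l1 - l2)) with (kap D nu Rr / 2 * ((s1 - l1) - (s2 - l2))) by ring.
  rewrite Rabs_mult, (Rabs_right (kap D nu Rr / 2)) by lra.
  apply Rle_lt_trans with (kap D nu Rr / 2 * (e' + e')).
  { apply Rmult_le_compat_l; [lra|]. eapply Rle_trans. apply Rabs_triang. rewrite Rabs_Ropp. lra. }
  replace (kap D nu Rr / 2 * (e' + e')) with (eps / 2 - eps / (2 * (kap D nu Rr + 1))) by (unfold e'; field; lra).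
  assert (0 < eps / (2 * (kap D nu Rr + 1))) by (apply Rdiv_lt_0_compat; lra). lra.
Qed.

Definition coefD (q : Cplx) (AB : Cplx * Cplx) : Cplx * Cplx := (Cmul q (snd AB), Copp (Cmul q (fst AB))).
Fixpoint coefk (k : nat) (q : Cplx) (AB : Cplx * Cplx) : Cplx * Cplx :=
  match k with O => AB | S k => coefD q (coefk k q AB) end.
Definition Trk (k : nat) (q r A B : Cplx) (x : R) : Cplx :=
  Cadd (Cmul (fst (coefk k q (A, B))) (Ccos (aff q r x))) (Cmul (snd (coefk k q (A, B))) (Csin (aff q r x))).

Lemma Trk_der k q r A B x : Cder (Trk k q r A B) x (Trk (S k) q r A B x).
Proof. unfold Trk. eapply Cder_val. apply Cder_add; apply Cder_cmul. apply Cder_cos_aff. apply Cder_sin_aff.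
  simpl. destruct (coefk k q (A, B)) as [a b]. simpl. unfold Csub. ring. Qed.

Lemma Trk_SS k q r A B x : Trk (S (S k)) q r A B x = Copp (Cmul (Cmul q q) (Trk k q r A B x)).
Proof. unfold Trk. simpl. destruct (coefk k q (A, B)) as [a b]. simpl. ring. Qed.

Lemma Cadd_eq_ext a b c d : a = c -> b = d -> Cadd a b = Cadd c d.
Proof. intros; subst; auto. Qed.

Lemma cosh_plus' x y : cosh (x + y) = cosh x * cosh y + sinh x * sinh y.
Proof. unfold cosh, sinh. rewrite exp_plus, Ropp_plus_distr, exp_plus. field. Qed.
Lemma sinh_plus' x y : sinh (x + y) = sinh x * cosh y + cosh x * sinh y.
Proof. unfold cosh, sinh. rewrite exp_plus, Ropp_plus_distr, exp_plus. field. Qed.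

Lemma Ccos_add z w : Ccos (Cadd z w) = Csub (Cmul (Ccos z) (Ccos w)) (Cmul (Csin z) (Csin w)).
Proof. destruct z as [z1 z2], w as [w1 w2]. unfold Csub, Cadd, Copp, Csin, Ccos, Cmul; simpl.
  rewrite sin_plus, cos_plus, cosh_plus', sinh_plus'. apply ceq; ring. Qed.
Lemma Csin_add z w : Csin (Cadd z w) = Cadd (Cmul (Csin z) (Ccos w)) (Cmul (Ccos z) (Csin w)).
Proof. destruct z as [z1 z2], w as [w1 w2]. unfold Csub, Cadd, Copp, Csin, Ccos, Cmul; simpl.
  rewrite sin_plus, cos_plus, cosh_plus', sinh_plus'. apply ceq; ring. Qed.

Lemma Csin_opp z : Csin (Copp z) = Copp (Csin z).
Proof. destruct z as [a b]; unfold Csin, Copp; simpl. rewrite cos_neg, sin_neg.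
  unfold cosh, sinh. rewrite Ropp_involutive. apply ceq; field. Qed.
Lemma Ccos_opp' z : Ccos (Copp z) = Ccos z.
Proof. destruct z as [a b]; unfold Ccos, Copp; simpl. rewrite cos_neg, sin_neg.
  unfold cosh, sinh. rewrite Ropp_involutive. apply ceq; field. Qed.

Lemma Cpyth z : Cadd (Cmul (Ccos z) (Ccos z)) (Cmul (Csin z) (Csin z)) = C1.
Proof. destruct z as [a b]; unfold Ccos, Csin, Cmul, Cadd, C1; simpl.
  assert (H1 : sin a ^ 2 + cos a ^ 2 = 1) by (rewrite <- (sin2_cos2 a); unfold Rsqr; ring).
  assert (H2 : cosh b ^ 2 - sinh b ^ 2 = 1).
  { unfold cosh, sinh. assert (exp b * exp (- b) = 1) by (rewrite <- exp_plus, Rplus_opp_r, exp_0; auto). nra. }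
  apply ceq; nra. Qed.

Lemma FTC_l (f : R -> R) a x : (forall y, continuous f y) -> is_derive (fun x => RInt f a x) x (f x).
Proof. intros Hc. apply (is_derive_RInt (V:=R_NormedModule) f (fun x => RInt f a x) a x); auto.
  exists (mkposreal 1 Rlt_0_1). intros y _. apply (RInt_correct (V:=R_CompleteNormedModule)).
  apply (ex_RInt_continuous (V:=R_CompleteNormedModule)). intros; auto. Qed.

Lemma FTC_r (f : R -> R) b x : (forall y, continuous f y) -> is_derive (fun x => RInt f x b) x (- f x).
Proof. intros Hc. apply (is_derive_RInt' (V:=R_NormedModule) f (fun x => RInt f x b) x b); auto.
  exists (mkposreal 1 Rlt_0_1). intros y _. apply (RInt_correct (V:=R_CompleteNormedModule)).
  apply (ex_RInt_continuous (V:=R_CompleteNormedModule)). intros; auto. Qed.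

Definition CI (w : R -> Cplx) (rt : R -> R) (a b : R) : Cplx :=
  (RInt (fun y => fst (w y) * rt y) a b, RInt (fun y => snd (w y) * rt y) a b).

Lemma Ccomp_cont (w : R -> Cplx) (rt : R -> R) :
  (forall y, ex_derive (fun t => fst (w t)) y) -> (forall y, ex_derive (fun t => snd (w t)) y) ->
  (forall y, continuous rt y) ->
  (forall y, continuous (fun y => fst (w y) * rt y) y) /\ (forall y, continuous (fun y => snd (w y) * rt y) y).
Proof. intros H1 H2 H3. split; intros y; apply (continuous_mult (fun y => _ (w y)) rt); auto; apply cont_of_ex; auto. Qed.

Lemma CI_der_l (w : R -> Cplx) rt a x :
  (forall y, ex_derive (fun t => fst (w t)) y) -> (forall y, ex_derive (fun t => snd (w t)) y) ->
  (forall y, continuous rt y) ->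
  Cder (fun x => CI w rt a x) x (Cmul (RtoC (rt x)) (w x)).
Proof. intros H1 H2 H3. destruct (Ccomp_cont w rt H1 H2 H3) as [K1 K2].
  replace (Cmul (RtoC (rt x)) (w x)) with ((fst (w x) * rt x, snd (w x) * rt x) : Cplx)
    by (destruct (w x); unfold Cmul, RtoC; simpl; apply ceq; ring).
  split; simpl. apply (FTC_l (fun y => fst (w y) * rt y)); auto. apply (FTC_l (fun y => snd (w y) * rt y)); auto. Qed.

Lemma CI_der_r (w : R -> Cplx) rt b x :
  (forall y, ex_derive (fun t => fst (w t)) y) -> (forall y, ex_derive (fun t => snd (w t)) y) ->
  (forall y, continuous rt y) ->
  Cder (fun x => CI w rt x b) x (Copp (Cmul (RtoC (rt x)) (w x))).
Proof. intros H1 H2 H3. destruct (Ccomp_cont w rt H1 H2 H3) as [K1 K2].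
  replace (Copp (Cmul (RtoC (rt x)) (w x))) with ((- (fst (w x) * rt x), - (snd (w x) * rt x)) : Cplx)
    by (destruct (w x); unfold Cmul, RtoC, Copp; simpl; apply ceq; ring).
  split; simpl. apply (FTC_r (fun y => fst (w y) * rt y)); auto. apply (FTC_r (fun y => snd (w y) * rt y)); auto. Qed.

Definition Cy p y := Ccos (aff p C0 y).
Definition Sy p y := Csin (aff p C0 y).

Definition ak p k x := Cadd (Trk k p C0 C1 C0 x) (Trk k (Copp p) (Cscal 2 p) (Copp C1) C0 x).
Definition bk p k x := Cadd (Trk k (Copp p) (Cscal 2 p) C0 C1 x) (Trk k p C0 C0 (Copp C1) x).
Definition gk p k x := Cadd (Trk k p C0 C1 C0 x) (Trk k p (Cscal 2 p) (Copp C1) C0 x).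
Definition dk p k x := Cadd (Trk k p (Cscal 2 p) C0 (Copp C1) x) (Trk k p C0 C0 (Copp C1) x).

Definition Phi p rt k x :=
  Cadd (Cadd (Cmul (ak p k x) (CI (Cy p) rt (-1) x)) (Cmul (bk p k x) (CI (Sy p) rt (-1) x)))
       (Cadd (Cmul (gk p k x) (CI (Cy p) rt x 1)) (Cmul (dk p k x) (CI (Sy p) rt x 1))).

Definition brk p k x :=
  Csub (Cadd (Cmul (ak p k x) (Cy p x)) (Cmul (bk p k x) (Sy p x)))
       (Cadd (Cmul (gk p k x) (Cy p x)) (Cmul (dk p k x) (Sy p x))).

Lemma Cy_exd1 p y : ex_derive (fun t => fst (Cy p t)) y.
Proof. destruct p; unfold Cy, aff, Ccos, Cscal, Cadd, C0; simpl. unfold cosh. auto_derive; auto. Qed.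
Lemma Cy_exd2 p y : ex_derive (fun t => snd (Cy p t)) y.
Proof. destruct p; unfold Cy, aff, Ccos, Cscal, Cadd, C0; simpl. unfold sinh. auto_derive; auto. Qed.
Lemma Sy_exd1 p y : ex_derive (fun t => fst (Sy p t)) y.
Proof. destruct p; unfold Sy, aff, Csin, Cscal, Cadd, C0; simpl. unfold cosh. auto_derive; auto. Qed.
Lemma Sy_exd2 p y : ex_derive (fun t => snd (Sy p t)) y.
Proof. destruct p; unfold Sy, aff, Csin, Cscal, Cadd, C0; simpl. unfold sinh. auto_derive; auto. Qed.

Lemma ak_der p k x : Cder (ak p k) x (ak p (S k) x).
Proof. apply Cder_add; apply Trk_der. Qed.
Lemma bk_der p k x : Cder (bk p k) x (bk p (S k) x).
Proof. apply Cder_add; apply Trk_der. Qed.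
Lemma gk_der p k x : Cder (gk p k) x (gk p (S k) x).
Proof. apply Cder_add; apply Trk_der. Qed.
Lemma dk_der p k x : Cder (dk p k) x (dk p (S k) x).
Proof. apply Cder_add; apply Trk_der. Qed.

Lemma Phi_der p rt k x : (forall y, continuous rt y) ->
  Cder (Phi p rt k) x (Cadd (Phi p rt (S k) x) (Cmul (RtoC (rt x)) (brk p k x))).
Proof. intros Hr. unfold Phi. eapply Cder_val.
  apply Cder_add; apply Cder_add; apply Cder_mul.
  apply ak_der. apply CI_der_l; auto using Cy_exd1, Cy_exd2, Sy_exd1, Sy_exd2.
  apply bk_der. apply CI_der_l; auto using Cy_exd1, Cy_exd2, Sy_exd1, Sy_exd2.
  apply gk_der. apply CI_der_r; auto using Cy_exd1, Cy_exd2, Sy_exd1, Sy_exd2.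
  apply dk_der. apply CI_der_r; auto using Cy_exd1, Cy_exd2, Sy_exd1, Sy_exd2.

  unfold brk. unfold Csub. 
  generalize (ak p k x) (bk p k x) (gk p k x) (dk p k x) (ak p (S k) x) (bk p (S k) x) (gk p (S k) x) (dk p (S k) x) (Cy p x) (Sy p x) (RtoC (rt x)).
  unfold Phi. 
  generalize (CI (Cy p) rt (-1) x) (CI (Sy p) rt (-1) x) (CI (Cy p) rt x 1) (CI (Sy p) rt x 1).
  intros. ring.
Qed.

Lemma ak_SS p k x : ak p (S (S k)) x = Copp (Cmul (Cmul p p) (ak p k x)).
Proof. unfold ak. rewrite !Trk_SS. generalize (Trk k p C0 C1 C0 x) (Trk k (Copp p) (Cscal 2 p) (Copp C1) C0 x). intros; ring. Qed.
Lemma bk_SS p k x : bk p (S (S k)) x = Copp (Cmul (Cmul p p) (bk p k x)).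
Proof. unfold bk. rewrite !Trk_SS. generalize (Trk k (Copp p) (Cscal 2 p) C0 C1 x) (Trk k p C0 C0 (Copp C1) x). intros; ring. Qed.
Lemma gk_SS p k x : gk p (S (S k)) x = Copp (Cmul (Cmul p p) (gk p k x)).
Proof. unfold gk. rewrite !Trk_SS. generalize (Trk k p C0 C1 C0 x) (Trk k p (Cscal 2 p) (Copp C1) C0 x). intros; ring. Qed.
Lemma dk_SS p k x : dk p (S (S k)) x = Copp (Cmul (Cmul p p) (dk p k x)).
Proof. unfold dk. rewrite !Trk_SS. generalize (Trk k p (Cscal 2 p) C0 (Copp C1) x) (Trk k p C0 C0 (Copp C1) x). intros; ring. Qed.

Lemma Phi_SS p rt k x : Phi p rt (S (S k)) x = Copp (Cmul (Cmul p p) (Phi p rt k x)).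
Proof. unfold Phi. rewrite ak_SS, bk_SS, gk_SS, dk_SS.
  generalize (ak p k x) (bk p k x) (gk p k x) (dk p k x)
   (CI (Cy p) rt (-1) x) (CI (Sy p) rt (-1) x) (CI (Cy p) rt x 1) (CI (Sy p) rt x 1). intros; ring. Qed.

Lemma E1 p x : Ccos (aff (Copp p) (Cscal 2 p) x) = Cadd (Cmul (Ccos (Cscal 2 p)) (Ccos (aff p C0 x))) (Cmul (Csin (Cscal 2 p)) (Csin (aff p C0 x))).
Proof. replace (aff (Copp p) (Cscal 2 p) x) with (Cadd (Cscal 2 p) (Copp (aff p C0 x))) by (destruct p; unfold aff, Cadd, Copp, Cscal, C0; cring).
  rewrite Ccos_add, Ccos_opp', Csin_opp. unfold Csub. ring. Qed.
Lemma E2 p x : Csin (aff (Copp p) (Cscal 2 p) x) = Csub (Cmul (Csin (Cscal 2 p)) (Ccos (aff p C0 x))) (Cmul (Ccos (Cscal 2 p)) (Csin (aff p C0 x))).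
Proof. replace (aff (Copp p) (Cscal 2 p) x) with (Cadd (Cscal 2 p) (Copp (aff p C0 x))) by (destruct p; unfold aff, Cadd, Copp, Cscal, C0; cring).
  rewrite Csin_add, Ccos_opp', Csin_opp. unfold Csub. ring. Qed.
Lemma E3 p x : Ccos (aff p (Cscal 2 p) x) = Csub (Cmul (Ccos (Cscal 2 p)) (Ccos (aff p C0 x))) (Cmul (Csin (Cscal 2 p)) (Csin (aff p C0 x))).
Proof. replace (aff p (Cscal 2 p) x) with (Cadd (Cscal 2 p) (aff p C0 x)) by (destruct p; unfold aff, Cadd, Copp, Cscal, C0; cring).
  rewrite Ccos_add. auto. Qed.
Lemma E4 p x : Csin (aff p (Cscal 2 p) x) = Cadd (Cmul (Csin (Cscal 2 p)) (Ccos (aff p C0 x))) (Cmul (Ccos (Cscal 2 p)) (Csin (aff p C0 x))).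
Proof. replace (aff p (Cscal 2 p) x) with (Cadd (Cscal 2 p) (aff p C0 x)) by (destruct p; unfold aff, Cadd, Copp, Cscal, C0; cring).
  rewrite Csin_add. auto. Qed.

Ltac brk_prep p x :=
  unfold brk, ak, bk, gk, dk, Trk, Cy, Sy; cbn [coefk coefD fst snd];
  rewrite ?E1, ?E2, ?E3, ?E4;
  generalize (Ccos (Cscal 2 p)) (Csin (Cscal 2 p)) (Ccos (aff p C0 x)) (Csin (aff p C0 x)); intros C2 S2 c s.

Lemma brk0 p x : brk p 0 x = C0.
Proof. brk_prep p x. unfold Csub. ring. Qed.
Lemma brk2 p x : brk p 2 x = C0.
Proof. brk_prep p x. unfold Csub. ring. Qed.
Lemma brk1 p x : brk p 1 x = Copp (Cmul (Cadd p p) (Csin (Cscal 2 p))).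
Proof. pose proof (Cpyth (aff p C0 x)) as Hp. revert Hp. brk_prep p x. intros Hp.
  transitivity (Copp (Cmul (Cmul (Cadd p p) S2) (Cadd (Cmul c c) (Cmul s s)))). unfold Csub; ring.
  rewrite Hp. ring. Qed.
Lemma brk3 p x : brk p 3 x = Cmul (Cadd (Cmul p (Cmul p p)) (Cmul p (Cmul p p))) (Csin (Cscal 2 p)).
Proof. pose proof (Cpyth (aff p C0 x)) as Hp. revert Hp. brk_prep p x. intros Hp.
  transitivity (Cmul (Cmul (Cadd (Cmul p (Cmul p p)) (Cmul p (Cmul p p))) S2) (Cadd (Cmul c c) (Cmul s s))). unfold Csub; ring.
  rewrite Hp. ring. Qed.

Definition Kc D nu Rr := 1 / (D * nu * Im (Csub (pplus2 D nu Rr) (pminus2 D nu Rr))).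
Definition Zc p := Cinv (Cmul p (Csin (Cscal 2 p))).
Definition vk D nu Rr p rt k x := Kc D nu Rr * snd (Cmul (Phi p rt k x) (Zc p)).

Lemma vk_der D nu Rr p rt k x : (forall y, continuous rt y) ->
  is_derive (vk D nu Rr p rt k) x
    (Kc D nu Rr * snd (Cmul (Cadd (Phi p rt (S k) x) (Cmul (RtoC (rt x)) (brk p k x))) (Zc p))).
Proof. intros Hr. pose proof (Cder_mulc _ x _ (Zc p) (Phi_der p rt k x Hr)) as [_ H2].
  unfold vk. apply rd. apply derivable_pt_lim_scal. apply dr. exact H2. Qed.

Lemma pS_nz D nu Rr p : 0 < D -> 0 < nu -> discr D nu Rr < 0 -> Cmul p p = pplus2 D nu Rr ->
  Cmul p (Csin (Cscal 2 p)) <> C0.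
Proof. intros HD Hn Hd Hp E. pose proof (Csin2p_nz D nu Rr p HD Hn Hd Hp) as Hs.
  pose proof (a2_pos D nu Rr HD Hn Hd) as Ha.
  assert (Hp0 : p <> C0) by (intros E'; rewrite E' in Hp; rewrite <- Hp in Ha; unfold Cmul, C0 in Ha; simpl in Ha; lra).
  apply Hs. transitivity (Cmul (Cinv p) (Cmul p (Csin (Cscal 2 p)))). field; auto. rewrite E. unfold C0. destruct (Cinv p); cring. Qed.

Lemma pS_nz2 D nu Rr p : 0 < D -> 0 < nu -> discr D nu Rr < 0 -> Cmul p p = pplus2 D nu Rr ->
  Csin (Cscal 2 p) <> C0 /\ p <> C0.
Proof. intros HD Hn Hd Hp. split. apply (Csin2p_nz D nu Rr p); auto.
  pose proof (a2_pos D nu Rr HD Hn Hd) as Ha.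
  intros E'; rewrite E' in Hp; rewrite <- Hp in Ha; unfold Cmul, C0 in Ha; simpl in Ha; lra. Qed.

Lemma snd_add_RtoC w t : snd (Cadd w (RtoC t)) = snd w.
Proof. destruct w; unfold Cadd, RtoC; simpl; ring. Qed.

Lemma is_der_val (f : R -> R) x l l' : is_derive f x l -> l = l' -> is_derive f x l'.
Proof. intros H E; subst; auto. Qed.

Lemma vk_der02 D nu Rr p rt k x : (forall y, continuous rt y) -> (k = 0 \/ k = 2)%nat ->
  is_derive (vk D nu Rr p rt k) x (vk D nu Rr p rt (S k) x).
Proof. intros Hr Hk. eapply is_der_val. apply vk_der; auto.
  unfold vk. f_equal. destruct Hk; subst; [rewrite brk0|rewrite brk2];
  unfold C0; destruct (Phi p rt _ x), (Zc p); unfold Cmul, Cadd, RtoC; simpl; ring. Qed.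

Lemma vk_der1 D nu Rr p rt x : 0 < D -> 0 < nu -> discr D nu Rr < 0 -> Cmul p p = pplus2 D nu Rr ->
  (forall y, continuous rt y) -> is_derive (vk D nu Rr p rt 1) x (vk D nu Rr p rt 2 x).
Proof. intros HD Hn Hd Hp Hr. eapply is_der_val. apply vk_der; auto.
  unfold vk. f_equal. rewrite brk1. pose proof (pS_nz D nu Rr p HD Hn Hd Hp) as Hz.
  replace (Cmul (Cadd (Phi p rt 2 x) (Cmul (RtoC (rt x)) (Copp (Cmul (Cadd p p) (Csin (Cscal 2 p)))))) (Zc p))
    with (Cadd (Cmul (Phi p rt 2 x) (Zc p)) (RtoC (- 2 * rt x))).
  apply snd_add_RtoC.
  replace (RtoC (- 2 * rt x)) with (Cmul (RtoC (rt x)) (Copp (Cadd C1 C1))) by (apply ceq'; unfold C1; simpl; ring).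
  unfold Zc. field. apply (pS_nz2 D nu Rr); auto. Qed.

Lemma vk_der3 D nu Rr p rt x : 0 < D -> 0 < nu -> discr D nu Rr < 0 -> Cmul p p = pplus2 D nu Rr ->
  (forall y, continuous rt y) -> is_derive (vk D nu Rr p rt 3) x (vk D nu Rr p rt 4 x + rt x / (D * nu)).
Proof. intros HD Hn Hd Hp Hr. eapply is_der_val. apply vk_der; auto.
  unfold vk. rewrite brk3. pose proof (pS_nz D nu Rr p HD Hn Hd Hp) as Hz.
  pose proof (a2_pos D nu Rr HD Hn Hd) as Ha.
  replace (Cmul (Cadd (Phi p rt 4 x) (Cmul (RtoC (rt x)) (Cmul (Cadd (Cmul p (Cmul p p)) (Cmul p (Cmul p p))) (Csin (Cscal 2 p))))) (Zc p))
    with (Cadd (Cmul (Phi p rt 4 x) (Zc p)) (Cmul (RtoC (rt x)) (Cadd (Cmul p p) (Cmul p p)))).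
  2:{ unfold Zc. field. apply (pS_nz2 D nu Rr); auto. }
  rewrite Hp. destruct (Cmul (Phi p rt 4 x) (Zc p)) as [w1 w2].
  assert (EI : Im (Csub (pplus2 D nu Rr) (pminus2 D nu Rr)) = 2 * snd (pplus2 D nu Rr))
    by (unfold Im, pplus2, pminus2, Csub, Cadd, Copp; simpl; ring).
  unfold Kc. rewrite EI. destruct (pplus2 D nu Rr) as [a1 a2]. unfold Cadd, Cmul, RtoC; cbn [fst snd] in *.
  match goal with |- ?a = ?b => change (@eq R a b) end. field. repeat split; lra.
Qed.

Lemma char_eq D nu Rr p : 0 < D -> 0 < nu -> discr D nu Rr < 0 -> Cmul p p = pplus2 D nu Rr ->
  Cadd (Cadd (RtoC (1 + D * Rr)) (Copp (Cmul (RtoC D) (Cmul p p)))) (Cmul (RtoC (D * nu)) (Cmul (Cmul p p) (Cmul p p))) = C0.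
Proof. intros HD Hn Hd Hp. rewrite Hp.
  assert (HX : 0 <= 4 * D * nu * (1 + D * Rr) - D ^ 2) by (unfold discr in Hd; lra).
  pose proof (sqrt_sqrt _ HX) as ES. unfold pplus2. set (S := sqrt (4 * D * nu * (1 + D * Rr) - D ^ 2)) in *.
  unfold Cadd, Copp, Cmul, RtoC, C0; cbn [fst snd]. apply ceq.
  - field_simplify; try lra. replace (S ^ 2) with (S * S) by ring. rewrite ES. field. lra.
  - field. lra.
Qed.

Lemma ode_v D nu Rr p rt x : 0 < D -> 0 < nu -> discr D nu Rr < 0 -> Cmul p p = pplus2 D nu Rr ->
  (1 + D * Rr) * vk D nu Rr p rt 0 x + D * vk D nu Rr p rt 2 x + D * nu * (vk D nu Rr p rt 4 x + rt x / (D * nu)) = rt x.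
Proof. intros HD Hn Hd Hp. pose proof (char_eq D nu Rr p HD Hn Hd Hp) as Ec.
  unfold vk. rewrite (Phi_SS p rt 2 x), (Phi_SS p rt 0 x).
  set (W := Cmul (Phi p rt 0 x) (Zc p)).
  replace (Cmul (Copp (Cmul (Cmul p p) (Phi p rt 0 x))) (Zc p)) with (Copp (Cmul (Cmul p p) W)) by (unfold W; ring).
  replace (Cmul (Copp (Cmul (Cmul p p) (Copp (Cmul (Cmul p p) (Phi p rt 0 x))))) (Zc p)) with (Cmul (Cmul (Cmul p p) (Cmul p p)) W) by (unfold W; ring).
  assert (E : (1 + D * Rr) * snd W + D * snd (Copp (Cmul (Cmul p p) W)) + D * nu * snd (Cmul (Cmul (Cmul p p) (Cmul p p)) W) =
    snd (Cmul (Cadd (Cadd (RtoC (1 + D * Rr)) (Copp (Cmul (RtoC D) (Cmul p p)))) (Cmul (RtoC (D * nu)) (Cmul (Cmul p p) (Cmul p p)))) W)).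
  { clearbody W. destruct (Cmul p p) as [u v], W as [w1 w2]. unfold Cmul, Cadd, Copp, RtoC; cbn [fst snd]. ring. }
  rewrite Ec in E. replace (snd (Cmul C0 W)) with 0 in E by (destruct W; unfold C0, Cmul; simpl; ring).
  transitivity (Kc D nu Rr * ((1 + D * Rr) * snd W + D * snd (Copp (Cmul (Cmul p p) W)) + D * nu * snd (Cmul (Cmul (Cmul p p) (Cmul p p)) W)) + rt x).
  field. lra. rewrite E. ring.
Qed.

Lemma CI_pt w rt a : CI w rt a a = C0.
Proof. unfold CI, C0. rewrite !RInt_point. reflexivity. Qed.

Lemma aff_m1 p : aff p C0 (-1) = Copp p.
Proof. destruct p; unfold aff, Cscal, Cadd, Copp, C0; cring. Qed.
Lemma aff2_m1 p : aff p (Cscal 2 p) (-1) = p.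
Proof. destruct p; unfold aff, Cscal, Cadd, Copp, C0; cring. Qed.
Lemma aff_1 p : aff p C0 1 = p.
Proof. destruct p; unfold aff, Cscal, Cadd, Copp, C0; cring. Qed.
Lemma aff3_1 p : aff (Copp p) (Cscal 2 p) 1 = p.
Proof. destruct p; unfold aff, Cscal, Cadd, Copp, C0; cring. Qed.

Lemma Phi0_m1 p rt : Phi p rt 0 (-1) = C0.
Proof. unfold Phi, gk, dk, Trk. cbn [coefk fst snd]. rewrite !CI_pt, aff_m1, aff2_m1, Ccos_opp', Csin_opp.
  generalize (Ccos p) (Csin p) (Ccos (Copp p)) (Csin (Copp p)) (CI (Cy p) rt (-1) 1) (CI (Sy p) rt (-1) 1). intros. ring. Qed.

Lemma Phi0_1 p rt : Phi p rt 0 1 = C0.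
Proof. unfold Phi, ak, bk, Trk. cbn [coefk fst snd]. rewrite !CI_pt, aff_1, aff3_1.
  generalize (Ccos p) (Csin p) (CI (Cy p) rt (-1) 1) (CI (Sy p) rt (-1) 1). intros. ring. Qed.

Lemma vk_zero D nu Rr p rt k x : (k = 0 \/ k = 2)%nat -> Phi p rt 0 x = C0 -> vk D nu Rr p rt k x = 0.
Proof. intros Hk H. unfold vk. destruct Hk; subst. rewrite H. destruct (Zc p); unfold C0, Cmul; simpl; ring.
  rewrite Phi_SS, H. destruct (Zc p), p; unfold C0, Cmul, Copp; simpl; ring. Qed.

Definition Nn (p : Cplx) (x y : R) : Cplx :=
  Cadd (Copp (Ccos (Csub (Cscal 2 p) (Cscal (Rabs (x - y)) p)))) (Ccos (Cscal (x + y) p)).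

Lemma Gfun_Nn D nu Rr p x y : Gfun D nu Rr p x y = Kc D nu Rr * snd (Cmul (Nn p x y) (Zc p)).
Proof. reflexivity. Qed.

Lemma Nn_lt p x y : y <= x -> Nn p x y = Cadd (Cmul (ak p 0 x) (Cy p y)) (Cmul (bk p 0 x) (Sy p y)).
Proof. intros H. unfold Nn, ak, bk, Trk, Cy, Sy. cbn [coefk fst snd]. rewrite Rabs_pos_eq by lra.
  replace (Csub (Cscal 2 p) (Cscal (x - y) p)) with (Cadd (aff (Copp p) (Cscal 2 p) x) (aff p C0 y))
    by (destruct p; unfold aff, Csub, Cadd, Copp, Cscal, C0; cring).
  replace (Cscal (x + y) p) with (Cadd (aff p C0 x) (aff p C0 y)) by (destruct p; unfold aff, Csub, Cadd, Copp, Cscal, C0; cring).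
  rewrite !Ccos_add.
  generalize (Ccos (aff (Copp p) (Cscal 2 p) x)) (Csin (aff (Copp p) (Cscal 2 p) x)) (Ccos (aff p C0 x)) (Csin (aff p C0 x))
     (Ccos (aff p C0 y)) (Csin (aff p C0 y)). intros. unfold Csub. ring. Qed.

Lemma Nn_gt p x y : x <= y -> Nn p x y = Cadd (Cmul (gk p 0 x) (Cy p y)) (Cmul (dk p 0 x) (Sy p y)).
Proof. intros H. unfold Nn, gk, dk, Trk, Cy, Sy. cbn [coefk fst snd].
  rewrite Rabs_left1 by lra.
  replace (Csub (Cscal 2 p) (Cscal (- (x - y)) p)) with (Cadd (aff p (Cscal 2 p) x) (Copp (aff p C0 y)))
    by (destruct p; unfold aff, Csub, Cadd, Copp, Cscal, C0; cring).
  replace (Cscal (x + y) p) with (Cadd (aff p C0 x) (aff p C0 y)) by (destruct p; unfold aff, Csub, Cadd, Copp, Cscal, C0; cring).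
  rewrite !Ccos_add, Ccos_opp', Csin_opp.
  generalize (Ccos (aff p (Cscal 2 p) x)) (Csin (aff p (Cscal 2 p) x)) (Ccos (aff p C0 x)) (Csin (aff p C0 x))
     (Ccos (aff p C0 y)) (Csin (aff p C0 y)). intros. unfold Csub. ring. Qed.

Lemma is_RInt_lin4 (f1 f2 f3 f4 : R -> R) a b I1 I2 I3 I4 k1 k2 k3 k4 :
  is_RInt f1 a b I1 -> is_RInt f2 a b I2 -> is_RInt f3 a b I3 -> is_RInt f4 a b I4 ->
  is_RInt (fun y => k1 * f1 y + k2 * f2 y + k3 * f3 y + k4 * f4 y) a b (k1 * I1 + k2 * I2 + k3 * I3 + k4 * I4).
Proof. intros H1 H2 H3 H4.
  apply (is_RInt_plus (V:=R_NormedModule)). apply (is_RInt_plus (V:=R_NormedModule)). apply (is_RInt_plus (V:=R_NormedModule)).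
  all: apply (is_RInt_scal (V:=R_NormedModule)); auto. Qed.

Lemma CI_isRInt1 w rt a b : (forall y, continuous (fun y => fst (w y) * rt y) y) ->
  is_RInt (fun y => fst (w y) * rt y) a b (fst (CI w rt a b)).
Proof. intros H. simpl. apply (RInt_correct (V:=R_CompleteNormedModule)). apply (ex_RInt_continuous (V:=R_CompleteNormedModule)). auto. Qed.
Lemma CI_isRInt2 w rt a b : (forall y, continuous (fun y => snd (w y) * rt y) y) ->
  is_RInt (fun y => snd (w y) * rt y) a b (snd (CI w rt a b)).
Proof. intros H. simpl. apply (RInt_correct (V:=R_CompleteNormedModule)). apply (ex_RInt_continuous (V:=R_CompleteNormedModule)). auto. Qed.

Lemma sep_int K Z u v w1 w2 rt a b :
  (forall y, continuous (fun y => fst (w1 y) * rt y) y) -> (forall y, continuous (fun y => snd (w1 y) * rt y) y) ->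
  (forall y, continuous (fun y => fst (w2 y) * rt y) y) -> (forall y, continuous (fun y => snd (w2 y) * rt y) y) ->
  is_RInt (fun y => K * snd (Cmul (Cadd (Cmul u (w1 y)) (Cmul v (w2 y))) Z) * rt y) a b
     (K * snd (Cmul (Cadd (Cmul u (CI w1 rt a b)) (Cmul v (CI w2 rt a b))) Z)).
Proof. intros H1 H2 H3 H4.
  pose proof (is_RInt_lin4 _ _ _ _ a b _ _ _ _ (K * fst (Cmul u Z)) (K * snd (Cmul u Z)) (K * fst (Cmul v Z)) (K * snd (Cmul v Z))
    (CI_isRInt2 w1 rt a b H2) (CI_isRInt1 w1 rt a b H1) (CI_isRInt2 w2 rt a b H4) (CI_isRInt1 w2 rt a b H3)) as K0.
  eapply is_RInt_ext in K0.
  - replace (K * snd (Cmul (Cadd (Cmul u (CI w1 rt a b)) (Cmul v (CI w2 rt a b))) Z)) with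
     (K * fst (Cmul u Z) * snd (CI w1 rt a b) + K * snd (Cmul u Z) * fst (CI w1 rt a b) +
      K * fst (Cmul v Z) * snd (CI w2 rt a b) + K * snd (Cmul v Z) * fst (CI w2 rt a b)).
    exact K0. destruct u, v, Z, (CI w1 rt a b), (CI w2 rt a b); unfold Cmul, Cadd; simpl; ring.
  - intros y _. destruct u, v, Z, (w1 y), (w2 y); unfold Cmul, Cadd; simpl; ring.
Qed.

Lemma Gint D nu Rr p rt x : (forall y, continuous rt y) -> -1 <= x <= 1 ->
  is_RInt (fun y => Gfun D nu Rr p x y * rt y) (-1) 1 (vk D nu Rr p rt 0 x).
Proof. intros Hr Hx.
  destruct (Ccomp_cont (Cy p) rt (Cy_exd1 p) (Cy_exd2 p) Hr) as [c1 c2].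
  destruct (Ccomp_cont (Sy p) rt (Sy_exd1 p) (Sy_exd2 p) Hr) as [c3 c4].
  pose proof (sep_int (Kc D nu Rr) (Zc p) (ak p 0 x) (bk p 0 x) (Cy p) (Sy p) rt (-1) x c1 c2 c3 c4) as I1.
  pose proof (sep_int (Kc D nu Rr) (Zc p) (gk p 0 x) (dk p 0 x) (Cy p) (Sy p) rt x 1 c1 c2 c3 c4) as I2.
  assert (J1 : is_RInt (fun y => Gfun D nu Rr p x y * rt y) (-1) x
     (Kc D nu Rr * snd (Cmul (Cadd (Cmul (ak p 0 x) (CI (Cy p) rt (-1) x)) (Cmul (bk p 0 x) (CI (Sy p) rt (-1) x))) (Zc p)))).
  { eapply is_RInt_ext; [|exact I1]. intros y Hy. rewrite Rmin_left, Rmax_right in Hy by lra.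
    rewrite Gfun_Nn, Nn_lt by lra. reflexivity. }
  assert (J2 : is_RInt (fun y => Gfun D nu Rr p x y * rt y) x 1
     (Kc D nu Rr * snd (Cmul (Cadd (Cmul (gk p 0 x) (CI (Cy p) rt x 1)) (Cmul (dk p 0 x) (CI (Sy p) rt x 1))) (Zc p)))).
  { eapply is_RInt_ext; [|exact I2]. intros y Hy. rewrite Rmin_left, Rmax_right in Hy by lra.
    rewrite Gfun_Nn, Nn_gt by lra. reflexivity. }
  pose proof (is_RInt_Chasles _ _ _ _ _ _ J1 J2) as I3.
  replace (vk D nu Rr p rt 0 x) with (plus
       (Kc D nu Rr * snd (Cmul (Cadd (Cmul (ak p 0 x) (CI (Cy p) rt (-1) x)) (Cmul (bk p 0 x) (CI (Sy p) rt (-1) x))) (Zc p)))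
       (Kc D nu Rr * snd (Cmul (Cadd (Cmul (gk p 0 x) (CI (Cy p) rt x 1)) (Cmul (dk p 0 x) (CI (Sy p) rt x 1))) (Zc p)))).
  exact I3. unfold vk, Phi, plus; simpl.
  generalize (Cadd (Cmul (ak p 0 x) (CI (Cy p) rt (-1) x)) (Cmul (bk p 0 x) (CI (Sy p) rt (-1) x)))
      (Cadd (Cmul (gk p 0 x) (CI (Cy p) rt x 1)) (Cmul (dk p 0 x) (CI (Sy p) rt x 1))). intros [u1 u2] [w1 w2].
  destruct (Zc p). unfold Cmul, Cadd; simpl; ring.
Qed.

Definition clamp (y : R) := Rmax (-1) (Rmin 1 y).

Lemma clamp_I y : inI (clamp y).
Proof. unfold inI, clamp, Rmax, Rmin. destruct (Rle_dec 1 y), (Rle_dec (-1) _); lra. Qed.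

Lemma clamp_id y : inI y -> clamp y = y.
Proof. unfold inI, clamp, Rmax, Rmin. intros. destruct (Rle_dec 1 y), (Rle_dec (-1) _); lra. Qed.

Lemma clamp_lip z y : Rabs (clamp z - clamp y) <= Rabs (z - y).
Proof. pose proof (Rle_abs (z - y)). pose proof (Rle_abs (- (z - y))). rewrite Rabs_Ropp in H0.
  apply Rabs_le. unfold clamp, Rmax, Rmin. repeat destruct Rle_dec; lra. Qed.

Definition rt_of (r : R -> R) (y : R) := r (clamp y).

Lemma rt_cont r : cont_on_I r -> forall y, continuous (rt_of r) y.
Proof. intros Hr y. apply continuity_pt_filterlim.
  intros eps He. destruct (Hr (clamp y) (clamp_I y) eps He) as [alp [Ha H]].
  exists alp. split; auto. intros z [_ Hz]. unfold rt_of. apply H. split. apply clamp_I.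
  simpl in *. unfold R_dist in *. eapply Rle_lt_trans. apply clamp_lip. auto. Qed.

Lemma rt_eq r y : inI y -> rt_of r y = r y.
Proof. intros; unfold rt_of; rewrite clamp_id; auto. Qed.

Lemma der_cont_I (f : R -> R) : (forall x, exists l, is_derive f x l) -> cont_on_I f.
Proof. intros H x _. destruct (H x) as [l Hl]. apply dr in Hl.
  pose proof (derivable_continuous_pt f x (exist _ l Hl)) as Hc.
  intros eps He. destruct (Hc eps He) as [alp [Ha K]]. exists alp; split; auto.
  intros z [_ Hz]. destruct (Req_dec x z). subst. simpl. unfold R_dist. rewrite Rminus_diag, Rabs_R0; auto.
  apply K. split; auto. split; auto. exact I. Qed.

Lemma part2 D nu Rr p : 0 < D -> 0 < nu -> discr D nu Rr < 0 -> Cmul p p = pplus2 D nu Rr ->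
  forall r : R -> R, cont_on_I r ->
     (forall x, inI x -> inhabited (Riemann_integrable (fun y => Gfun D nu Rr p x y * r y) (-1) 1)) /\
     exists v : R -> R,
       (forall x (hx : inI x)
          (pr : Riemann_integrable (fun y => Gfun D nu Rr p x y * r y) (-1) 1),
          v x = RiemannInt pr) /\
       is_solution D nu Rr r v.
Proof. intros HD Hn Hd Hp r Hr.
  set (rt := rt_of r). assert (Hc : forall y, continuous rt y) by (apply rt_cont; auto).
  assert (HI : forall x, inI x -> is_RInt (fun y => Gfun D nu Rr p x y * r y) (-1) 1 (vk D nu Rr p rt 0 x)).
  { intros x Hx. eapply is_RInt_ext; [|apply Gint; auto]. intros y Hy.
    rewrite Rmin_left, Rmax_right in Hy by lra. unfold rt. rewrite rt_eq; auto. unfold inI; lra. }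
  split.
  { intros x Hx. constructor. apply ex_RInt_Reals_0. exists (vk D nu Rr p rt 0 x). apply HI; auto. }
  exists (vk D nu Rr p rt 0). split.
  { intros x Hx pr. rewrite <- RInt_Reals. symmetry. apply (is_RInt_unique (V:=R_CompleteNormedModule)). apply HI; auto. }
  exists (vk D nu Rr p rt 1), (vk D nu Rr p rt 2), (vk D nu Rr p rt 3), (fun x => vk D nu Rr p rt 4 x + rt x / (D * nu)).
  split; [|split; [|split; [|split; [|split; [|split; [|split; [|split]]]]]]].
  - intros x Hx. split; [|split; [|split; [|split]]].
    + apply dr. apply vk_der02; auto.
    + apply dr. apply vk_der1; auto.
    + apply dr. apply vk_der02; auto.
    + apply dr. apply vk_der3; auto.
    + rewrite ode_v by auto. unfold rt. apply rt_eq. unfold inI; lra.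
  - apply der_cont_I. intros x. eexists. apply vk_der02; auto.
  - apply der_cont_I. intros x. eexists. apply vk_der1; auto.
  - apply der_cont_I. intros x. eexists. apply vk_der02; auto.
  - apply der_cont_I. intros x. eexists. apply vk_der3; auto.
  - apply vk_zero; auto. apply Phi0_m1.
  - apply vk_zero; auto. apply Phi0_1.
  - apply vk_zero; auto. apply Phi0_m1.
  - apply vk_zero; auto. apply Phi0_1.
Qed.

Theorem mainTheorem2 (D nu Rr : R) (p : Cplx)
  (hD : 0 < D) (hnu : 0 < nu) (hdisc : discr D nu Rr < 0)
  (hp : Cmul p p = pplus2 D nu Rr) :
  (forall x y : R, inI x -> inI y ->
     infinite_sum (fun n => series_term D nu Rr x y (S n)) (Gfun D nu Rr p x y)) /\
  (forall r : R -> R, cont_on_I r ->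
     (forall x, inI x -> inhabited (Riemann_integrable (fun y => Gfun D nu Rr p x y * r y) (-1) 1)) /\
     exists v : R -> R,
       (forall x (hx : inI x)
          (pr : Riemann_integrable (fun y => Gfun D nu Rr p x y * r y) (-1) 1),
          v x = RiemannInt pr) /\
       is_solution D nu Rr r v).
Proof. split. apply part1; auto. apply part2; auto. Qed.
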